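(* There exists a constant $C_0$ such that for every $m,\ell\ge1$, every choice of $\sigma_1\ge\sigma_2\ge\dots\ge\sigma_m\ge0$, $\rho_1\ge\rho_2\ge\dots\ge\rho_\ell>0$, $b_1,\dots,b_m>0$, $c_1,\dots,c_\ell>0$, every $1\le k\le\ell$, and both choices of sign, \[ \Bigl|\int_0^{\sqrt{\rho_\ell}}e^{\frac12i\lambda^2}e^{\pm i\sum_{j=1}^mb_j\sqrt{\lambda^2+\sigma_j}}\exp\Bigl(-\sum_{i=1}^\ell c_i\sqrt{\rho_i-\lambda^2}\Bigr)\frac{\lambda}{\sqrt{\rho_k-\lambda^2}}\,d\lambda\Bigr|\le C_0\min\Bigl[(1+\sigma_1+\rho_\ell)^{1/4},\ m^{3/2}c_k^{-1}\max_{j,i}(b_j+c_i)\Bigr]. \] *)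

(* Defs.v *)
From Stdlib Require Import Reals.
From Coquelicot Require Import Coquelicot.
Open Scope R_scope.

Fixpoint sum1 (f : nat -> R) (n : nat) : R :=
  match n with
  | O => 0
  | S n' => sum1 f n' + f (S n')
  end.

Fixpoint max1 (f : nat -> R) (n : nat) : R :=
  match n with
  | O => 0
  | 1%nat => f 1%nat
  | S n' => Rmax (max1 f n') (f (S n'))
  end.

(* The integrand
   e^{i lam^2/2} e^{eps i sum_j b_j sqrt(lam^2+sigma_j)}
     * exp(- sum_i c_i sqrt(rho_i - lam^2)) * lam / sqrt(rho_k - lam^2),
   written as amp * (cos phase, sin phase) with the real amplitude amp. *)
Definition integrand (m l k : nat) (eps : R) (sigma rho b c : nat -> R)
  (lam : R) : C :=
  let phase := lam ^ 2 / 2 + eps * sum1 (fun j => b j * sqrt (lam ^ 2 + sigma j)) m in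
  let amp := exp (- sum1 (fun i => c i * sqrt (rho i - lam ^ 2)) l)
             * lam / sqrt (rho k - lam ^ 2) in
  (amp * cos phase, amp * sin phase).

(* Main.v *)
Require Import Defs.
From Stdlib Require Import Reals.
From Coquelicot Require Import Coquelicot.
Open Scope R_scope.
From Stdlib Require Import Lra Lia Psatz.


Lemma sum1_ext (f g : nat -> R) n :
  (forall j, (1 <= j <= n)%nat -> f j = g j) -> sum1 f n = sum1 g n.
Proof.
  induction n as [|n IH]; intros H; simpl; [reflexivity|].
  rewrite IH by (intros; apply H; lia). rewrite H by lia. reflexivity.
Qed.

Lemma sum1_le (f g : nat -> R) n :
  (forall j, (1 <= j <= n)%nat -> f j <= g j) -> sum1 f n <= sum1 g n.
Proof.
  induction n as [|n IH]; intros H; simpl; [lra|].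
  assert (sum1 f n <= sum1 g n) by (apply IH; intros; apply H; lia).
  assert (f (S n) <= g (S n)) by (apply H; lia). lra.
Qed.

Lemma sum1_nonneg (f : nat -> R) n :
  (forall j, (1 <= j <= n)%nat -> 0 <= f j) -> 0 <= sum1 f n.
Proof.
  induction n as [|n IH]; intros H; simpl; [lra|].
  assert (0 <= sum1 f n) by (apply IH; intros; apply H; lia).
  assert (0 <= f (S n)) by (apply H; lia). lra.
Qed.

Lemma sum1_scal (f : nat -> R) a n : sum1 (fun j => a * f j) n = a * sum1 f n.
Proof. induction n; simpl; [ring| rewrite IHn; ring]. Qed.

Lemma sum1_term (f : nat -> R) n k :
  (forall j, (1 <= j <= n)%nat -> 0 <= f j) -> (1 <= k <= n)%nat -> f k <= sum1 f n.
Proof.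
  induction n as [|n IH]; intros H Hk; [lia|]. simpl.
  destruct (Nat.eq_dec k (S n)) as [->|Hne].
  - assert (0 <= sum1 f n) by (apply sum1_nonneg; intros; apply H; lia). lra.
  - assert (f k <= sum1 f n) by (apply IH; [intros; apply H; lia| lia]).
    assert (0 <= f (S n)) by (apply H; lia). lra.
Qed.

Lemma max1_ge (f : nat -> R) n j : (1 <= j <= n)%nat -> f j <= max1 f n.
Proof.
  induction n as [|n IH]; intros Hj; [lia|].
  destruct n as [|n].
  - assert (j = 1%nat) by lia. subst. simpl. lra.
  - change (max1 f (S (S n))) with (Rmax (max1 f (S n)) (f (S (S n)))).
    destruct (Nat.eq_dec j (S (S n))) as [->|Hne].
    + apply Rmax_r.
    + eapply Rle_trans; [apply IH; lia| apply Rmax_l].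
Qed.

Lemma sum1_le_max (f : nat -> R) n : sum1 f n <= INR n * max1 f n.
Proof.
  assert (H : forall p, (p <= n)%nat -> sum1 f p <= INR p * max1 f n).
  { induction p; intros Hp; cbn [sum1]; [simpl; lra|].
    rewrite S_INR. assert (f (S p) <= max1 f n) by (apply max1_ge; lia).
    specialize (IHp ltac:(lia)). lra. }
  apply H; lia.
Qed.

Lemma sum1_derive (F : nat -> R -> R) (F' : nat -> R) n x :
  (forall j, (1 <= j <= n)%nat -> is_derive (F j) x (F' j)) ->
  is_derive (fun y => sum1 (fun j => F j y) n) x (sum1 F' n).
Proof.
  induction n as [|n IH]; intros H; simpl.
  - apply (is_derive_const 0).
  - apply (is_derive_plus (fun y => sum1 (fun j => F j y) n) (F (S n))).
    apply IH; intros; apply H; lia. apply H; lia.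
Qed.

Lemma sum1_cont (F : nat -> R -> R) n x :
  (forall j, (1 <= j <= n)%nat -> continuous (F j) x) ->
  continuous (fun y => sum1 (fun j => F j y) n) x.
Proof.
  induction n as [|n IH]; intros H; simpl.
  - apply continuous_const.
  - apply (continuous_plus (fun y => sum1 (fun j => F j y) n) (F (S n))).
    apply IH; intros; apply H; lia. apply H; lia.
Qed.


Lemma dR_eq (f : R -> R) (x l l' : R) : is_derive f x l -> l = l' -> is_derive f x l'.
Proof. intros H ->; exact H. Qed.

Lemma dR_mult (f g : R -> R) x df dg : is_derive f x df -> is_derive g x dg ->
  is_derive (fun y => f y * g y) x (df * g x + f x * dg).
Proof. intros H1 H2. apply (is_derive_mult f g x df dg H1 H2). intros; apply Rmult_comm. Qed.

Lemma dR_comp (f g : R -> R) x df dg : is_derive f (g x) df -> is_derive g x dg ->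
  is_derive (fun y => f (g y)) x (dg * df).
Proof. intros H1 H2. apply (is_derive_comp f g x df dg H1 H2). Qed.

Lemma dR_plus (f g : R -> R) x df dg : is_derive f x df -> is_derive g x dg ->
  is_derive (fun y => f y + g y) x (df + dg).
Proof. intros H1 H2. apply (is_derive_plus f g x df dg H1 H2). Qed.

Lemma dR_minus (f g : R -> R) x df dg : is_derive f x df -> is_derive g x dg ->
  is_derive (fun y => f y - g y) x (df - dg).
Proof. intros H1 H2. apply (is_derive_minus f g x df dg H1 H2). Qed.

Lemma cR_mult (f g : R -> R) x : continuous f x -> continuous g x -> continuous (fun y => f y * g y) x.
Proof. intros; apply (continuous_mult f g); auto. Qed.
Lemma cR_plus (f g : R -> R) x : continuous f x -> continuous g x -> continuous (fun y => f y + g y) x.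
Proof. intros; apply (continuous_plus f g); auto. Qed.
Lemma cR_minus (f g : R -> R) x : continuous f x -> continuous g x -> continuous (fun y => f y - g y) x.
Proof. intros; apply (continuous_minus f g); auto. Qed.
Lemma cR_inv (f : R -> R) x : continuous f x -> f x <> 0 -> continuous (fun y => / f y) x.
Proof. intros; apply (continuous_Rinv_comp f); auto. Qed.
Lemma cR_div (f g : R -> R) x : continuous f x -> continuous g x -> g x <> 0 -> continuous (fun y => f y / g y) x.
Proof. intros. apply cR_mult; auto. apply cR_inv; auto. Qed.
Lemma cR_comp (f g : R -> R) x : continuous g x -> continuous f (g x) -> continuous (fun y => f (g y)) x.
Proof. intros; apply (continuous_comp g f); auto. Qed.
Lemma cR_abs (f : R -> R) x : continuous f x -> continuous (fun y => Rabs (f y)) x.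
Proof. intros; apply (continuous_Rabs_comp f); auto. Qed.
Lemma cR_d (f : R -> R) x l : is_derive f x l -> continuous f x.
Proof. intros H. apply (ex_derive_continuous (K:=R_AbsRing) (V:=R_NormedModule) f x). exists l; exact H. Qed.

Lemma mono_deriv (f df : R -> R) p q : p <= q ->
  (forall x, p <= x <= q -> is_derive f x (df x)) ->
  (forall x, p <= x <= q -> 0 <= df x) -> f p <= f q.
Proof.
  intros Hpq Hd Hpos.
  destruct (MVT_gen f p q df) as [c [Hc E]].
  - intros x Hx. rewrite Rmin_left, Rmax_right in Hx by lra. apply Hd; lra.
  - intros x Hx. rewrite Rmin_left, Rmax_right in Hx by lra.
    apply continuity_pt_filterlim. apply (cR_d f x (df x)). apply Hd; lra.
  - rewrite Rmin_left, Rmax_right in Hc by lra.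
    assert (0 <= df c) by (apply Hpos; lra). nra.
Qed.

Lemma RInt_deriv (f df : R -> R) p q : p <= q ->
  (forall x, p <= x <= q -> is_derive f x (df x)) ->
  (forall x, p <= x <= q -> continuous df x) -> RInt df p q = f q - f p.
Proof.
  intros Hpq Hd Hc. apply is_RInt_unique.
  apply (is_RInt_derive f df p q).
  - intros x Hx. rewrite Rmin_left, Rmax_right in Hx by lra. apply Hd; lra.
  - intros x Hx. rewrite Rmin_left, Rmax_right in Hx by lra. apply Hc; lra.
Qed.

Lemma exRI (f : R -> R) p q : p <= q -> (forall x, p <= x <= q -> continuous f x) -> ex_RInt f p q.
Proof.
  intros Hpq Hc. apply (ex_RInt_continuous (V:=R_CompleteNormedModule)). intros z Hz.
  rewrite Rmin_left, Rmax_right in Hz by lra. apply Hc; lra.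
Qed.

Lemma RInt_le' (f g : R -> R) p q : p <= q ->
  (forall x, p <= x <= q -> continuous f x) -> (forall x, p <= x <= q -> continuous g x) ->
  (forall x, p <= x <= q -> f x <= g x) -> RInt f p q <= RInt g p q.
Proof.
  intros. apply RInt_le; auto using exRI. intros; apply H2; lra.
Qed.

Lemma abs_RInt_le' (f g : R -> R) p q : p <= q ->
  (forall x, p <= x <= q -> continuous f x) -> (forall x, p <= x <= q -> continuous g x) ->
  (forall x, p <= x <= q -> Rabs (f x) <= g x) -> Rabs (RInt f p q) <= RInt g p q.
Proof.
  intros. eapply Rle_trans. apply abs_RInt_le; auto using exRI.
  apply RInt_le'; auto. intros; apply cR_abs; auto.
Qed.

Lemma RInt_plus' (f g : R -> R) p q : p <= q ->
  (forall x, p <= x <= q -> continuous f x) -> (forall x, p <= x <= q -> continuous g x) ->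
  RInt (fun x => f x + g x) p q = RInt f p q + RInt g p q.
Proof. intros. apply (RInt_plus (V:=R_CompleteNormedModule) f g); auto using exRI. Qed.

Lemma RInt_scal' (f : R -> R) k p q : p <= q ->
  (forall x, p <= x <= q -> continuous f x) ->
  RInt (fun x => k * f x) p q = k * RInt f p q.
Proof. intros. apply (RInt_scal (V:=R_CompleteNormedModule) f); auto using exRI. Qed.

Lemma RInt_ext' (f g : R -> R) p q : p <= q -> (forall x, p <= x <= q -> f x = g x) ->
  RInt f p q = RInt g p q.
Proof. intros. apply (RInt_ext (V:=R_CompleteNormedModule)). intros x Hx. rewrite Rmin_left, Rmax_right in Hx by lra. apply H0; lra. Qed.

Lemma RInt_split (f : R -> R) p q r : p <= q -> q <= r ->
  (forall x, p <= x <= r -> continuous f x) -> RInt f p r = RInt f p q + RInt f q r.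
Proof.
  intros. symmetry. apply (RInt_Chasles (V:=R_CompleteNormedModule) f p q r); apply exRI; auto; intros; apply H1; lra.
Qed.

Lemma cR_ex (f : R -> R) x : ex_derive f x -> continuous f x.
Proof. intros [l H]. eapply cR_d; eauto. Qed.


Lemma inv_diff_bound (h : R -> R) p q mu x y : 0 < mu ->
  p <= x <= q -> p <= y <= q ->
  ((forall z, p<=z<=q -> mu <= h z) \/ (forall z, p<=z<=q -> h z <= -mu)) ->
  / h x - / h y <= / mu.
Proof.
  intros Hmu Hx Hy [H|H].
  - pose proof (H x Hx). pose proof (H y Hy).
    assert (0 < / h x <= / mu). { split. apply Rinv_0_lt_compat; lra. apply Rinv_le_contravar; lra. }
    assert (0 < / h y) by (apply Rinv_0_lt_compat; lra). lra.
  - pose proof (H x Hx). pose proof (H y Hy).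
    assert (/ h x < 0) by (apply Rinv_lt_0_compat; lra).
    assert (- / mu <= / h y).
    { assert (Hq : / (- h y) <= / mu) by (apply Rinv_le_contravar; lra).
      rewrite Rinv_opp in Hq. lra. }
    lra.
Qed.

Lemma piece (T T' psi h h' A A' : R -> R) p q mu :
  0 < mu -> p <= q ->
  (forall y, is_derive T y (T' y)) -> (forall y, Rabs (T y) <= 1) ->
  (forall y, continuous T' y) ->
  (forall x, p<=x<=q -> is_derive psi x (x * h x)) ->
  (forall x, p<=x<=q -> is_derive h x (h' x)) ->
  (forall x, p<=x<=q -> is_derive A x (A' x)) ->
  (forall x, p<=x<=q -> continuous h' x) ->
  (forall x, p<=x<=q -> continuous A' x) ->
  (forall x, p<=x<=q -> 0 <= A' x) ->
  0 <= A p ->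
  ((forall x, p<=x<=q -> mu <= h x) \/ (forall x, p<=x<=q -> h x <= -mu)) ->
  ((forall x, p<=x<=q -> 0 <= h' x) \/ (forall x, p<=x<=q -> h' x <= 0)) ->
  Rabs (RInt (fun x => x * A x * T' (psi x)) p q) <= 4 * A q / mu.
Proof.
  intros Hmu Hpq dT bT cT dpsi dh dA ch' cA' pA' pA Hsg Hs'.
  assert (Hh : forall x, p<=x<=q -> mu <= Rabs (h x)).
  { intros x Hx. destruct Hsg as [H|H]; specialize (H x Hx); unfold Rabs; destruct Rcase_abs; lra. }
  assert (Hh0 : forall x, p<=x<=q -> h x <> 0).
  { intros x Hx. specialize (Hh x Hx). intro E. rewrite E, Rabs_R0 in Hh. lra. }
  assert (Amon : forall x y, p <= x -> x <= y -> y <= q -> A x <= A y).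
  { intros x y H1 H2 H3. apply (mono_deriv A A'); auto; intros; [apply dA|apply pA']; lra. }
  assert (Apos : forall x, p<=x<=q -> 0 <= A x <= A q).
  { intros x Hx. split. apply Rle_trans with (A p); auto. apply Amon; lra. apply Amon; lra. }
  assert (cA : forall x, p<=x<=q -> continuous A x) by (intros; eapply cR_d; eauto).
  assert (ch : forall x, p<=x<=q -> continuous h x) by (intros; eapply cR_d; eauto).
  assert (cpsi : forall x, p<=x<=q -> continuous psi x) by (intros; eapply cR_d; eauto).
  assert (cT0 : forall y, continuous T y) by (intros; eapply cR_d; eauto).
  set (G := fun x => A x / h x).
  set (G' := fun x => A' x / h x - A x * h' x / (h x)^2).
  set (k := fun x => T (psi x) * G' x).
  set (g := fun x => x * A x * T' (psi x)).
  set (F := fun x => T (psi x) * G x).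
  set (F' := fun x => g x + k x).
  assert (ck : forall x, p<=x<=q -> continuous k x).
  { intros x Hx. unfold k, G'. apply cR_mult. apply cR_comp; auto.
    apply cR_minus. apply cR_div; auto. apply cR_div. apply cR_mult; auto.
    apply cR_mult; auto. apply cR_mult; auto. apply continuous_const.
    simpl. rewrite Rmult_1_r. apply Rmult_integral_contrapositive_currified; auto. }
  assert (cg : forall x, p<=x<=q -> continuous g x).
  { intros x Hx. unfold g. apply cR_mult. apply cR_mult; auto. apply continuous_id.
    apply cR_comp; auto. }
  assert (dF : forall x, p<=x<=q -> is_derive F x (F' x)).
  { intros x Hx. unfold F, F'.
    eapply dR_eq. apply dR_mult. apply dR_comp. apply dT. apply dpsi; auto.
    unfold G. apply is_derive_div; auto.
    cbv beta. unfold g, k, G, G'. field. apply Hh0; auto. }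
  assert (EF : RInt F' p q = F q - F p).
  { apply RInt_deriv; auto. intros x Hx. unfold F'. apply cR_plus; auto. }
  assert (EF2 : RInt F' p q = RInt g p q + RInt k p q).
  { unfold F'. apply RInt_plus'; auto. }
  assert (Eg : RInt g p q = F q - F p - RInt k p q) by lra.
  change (Rabs (RInt g p q) <= 4 * A q / mu). rewrite Eg.
  assert (HFb : forall x, p<=x<=q -> Rabs (F x) <= A q / mu).
  { intros x Hx. unfold F, G. rewrite Rabs_mult. specialize (bT (psi x)).
    assert (Rabs (A x / h x) <= A q / mu).
    { unfold Rdiv. rewrite Rabs_mult, Rabs_inv. rewrite (Rabs_right (A x)) by (destruct (Apos x Hx); lra).
      apply Rmult_le_compat. apply Apos; auto. left; apply Rinv_0_lt_compat.
      specialize (Hh x Hx); lra. apply Apos; auto. apply Rinv_le_contravar; auto. }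
    assert (0 <= Rabs (A x / h x)) by apply Rabs_pos.
    assert (0 <= Rabs (T (psi x))) by apply Rabs_pos. nra. }
  set (w := fun x => A' x / mu + A q * (Rabs (h' x) / (h x)^2)).
  assert (Hk : Rabs (RInt k p q) <= RInt w p q).
  { apply abs_RInt_le'; auto.
    - intros x Hx. unfold w. apply cR_plus. apply cR_mult; auto. apply continuous_const.
      apply cR_mult. apply continuous_const. apply cR_div. apply cR_abs; auto.
      apply cR_mult; auto. apply cR_mult; auto. apply continuous_const.
      simpl. rewrite Rmult_1_r. apply Rmult_integral_contrapositive_currified; auto.
    - intros x Hx. unfold k, w, G'. rewrite Rabs_mult.
      specialize (bT (psi x)). assert (0 <= Rabs (T (psi x))) by apply Rabs_pos.
      assert (Rabs (A' x / h x - A x * h' x / h x ^ 2) <= A' x / mu + A q * (Rabs (h' x) / h x ^ 2)).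
      { unfold Rminus. eapply Rle_trans. apply Rabs_triang. rewrite Rabs_Ropp.
        specialize (Hh x Hx). specialize (pA' x Hx). destruct (Apos x Hx) as [Ax1 Ax2].
        assert (0 < Rabs (h x)) by lra.
        apply Rplus_le_compat.
        - unfold Rdiv. rewrite Rabs_mult, Rabs_inv, (Rabs_right (A' x)) by lra.
          apply Rmult_le_compat_l; auto. apply Rinv_le_contravar; lra.
        - assert (Eh2 : h x ^ 2 = Rabs (h x) ^ 2) by (rewrite pow2_abs; reflexivity).
          rewrite Eh2. unfold Rdiv. rewrite !Rabs_mult, Rabs_inv, (Rabs_right (A x)) by lra.
          rewrite (Rabs_right (Rabs (h x) ^2)) by (apply Rle_ge, pow2_ge_0).
          assert (0 < / Rabs (h x) ^ 2) by (apply Rinv_0_lt_compat; apply pow_lt; lra).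
          assert (0 <= Rabs (h' x)) by apply Rabs_pos. rewrite <- Rmult_assoc.
          apply Rmult_le_compat_r; [lra|]. apply Rmult_le_compat_r; lra. }
      assert (0 <= Rabs (A' x / h x - A x * h' x / h x ^ 2)) by apply Rabs_pos.
      nra. }
  assert (Hint : RInt (fun x => Rabs (h' x) / (h x)^2) p q <= / mu).
  { destruct Hs' as [Hs'|Hs'].
    - rewrite (RInt_ext' _ (fun x => h' x / (h x)^2)).
      2: lra. 2: { intros x Hx. rewrite Rabs_right; auto. apply Rle_ge, Hs'; auto. }
      rewrite (RInt_deriv (fun x => -1 * / h x)); auto.
      + pose proof (inv_diff_bound h p q mu p q Hmu ltac:(lra) ltac:(lra) Hsg). lra.
      + intros x Hx. eapply dR_eq. apply (is_derive_scal (fun x => / h x)). apply is_derive_inv; auto.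
        field. apply Hh0; auto.
      + intros x Hx. apply cR_div; auto. apply cR_mult; auto. apply cR_mult; auto. apply continuous_const.
        simpl. rewrite Rmult_1_r. apply Rmult_integral_contrapositive_currified; auto.
    - rewrite (RInt_ext' _ (fun x => - h' x / (h x)^2)).
      2: lra. 2: { intros x Hx. rewrite Rabs_left1; auto. }
      rewrite (RInt_deriv (fun x => / h x)); auto.
      + pose proof (inv_diff_bound h p q mu q p Hmu ltac:(lra) ltac:(lra) Hsg). lra.
      + intros x Hx. apply is_derive_inv; auto.
      + intros x Hx. apply cR_div; auto. apply (continuous_opp h'); auto. apply cR_mult; auto. apply cR_mult; auto. apply continuous_const.
        simpl. rewrite Rmult_1_r. apply Rmult_integral_contrapositive_currified; auto. }
  assert (Hw : RInt w p q <= 2 * A q / mu).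
  { unfold w. rewrite RInt_plus'; auto.
    2: { intros. apply cR_mult; auto. apply continuous_const. }
    2: { intros x Hx. apply cR_mult. apply continuous_const. apply cR_div. apply cR_abs; auto.
      apply cR_mult; auto. apply cR_mult; auto. apply continuous_const.
      simpl. rewrite Rmult_1_r. apply Rmult_integral_contrapositive_currified; auto. }
    rewrite RInt_scal'; auto.
    2: { intros x Hx. apply cR_div. apply cR_abs; auto.
      apply cR_mult; auto. apply cR_mult; auto. apply continuous_const.
      simpl. rewrite Rmult_1_r. apply Rmult_integral_contrapositive_currified; auto. }
    rewrite (RInt_ext' (fun x => A' x / mu) (fun x => / mu * A' x)) by (auto; intros; unfold Rdiv; ring).
    rewrite RInt_scal'; auto. rewrite (RInt_deriv A A'); auto.
    destruct (Apos q ltac:(lra)). assert (0 < / mu) by (apply Rinv_0_lt_compat; lra).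
    assert (A q * RInt (fun x => Rabs (h' x) / h x ^ 2) p q <= A q * / mu) by (apply Rmult_le_compat_l; lra).
    unfold Rdiv. nra. }
  pose proof (HFb q ltac:(lra)). pose proof (HFb p ltac:(lra)).
  unfold Rminus. eapply Rle_trans. apply Rabs_triang. rewrite Rabs_Ropp.
  eapply Rle_trans. apply Rplus_le_compat_r. apply Rabs_triang. rewrite Rabs_Ropp.
  unfold Rdiv in *. lra.
Qed.


Lemma piece2 (T T' U U' th th' A A' : R -> R) p q Bs :
  p <= q ->
  (forall y, is_derive T y (T' y)) -> (forall y, Rabs (T y) <= 1) ->
  (forall y, continuous T' y) ->
  (forall y, is_derive U y (U' y)) -> (forall y, Rabs (U y) <= 1) ->
  (forall y, Rabs (U' y) <= 1) -> (forall y, continuous U' y) ->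
  (forall x, p<=x<=q -> is_derive th x (th' x)) ->
  (forall x, p<=x<=q -> continuous th' x) ->
  (forall x, p<=x<=q -> Rabs (th' x) <= Bs) ->
  (forall x, p<=x<=q -> is_derive A x (A' x)) ->
  (forall x, p<=x<=q -> continuous A' x) ->
  (forall x, p<=x<=q -> 0 <= A' x) ->
  0 <= A p ->
  Rabs (RInt (fun x => x * T' (x^2/2) * (A x * U (th x))) p q) <= 2 * A q + Bs * RInt A p q.
Proof.
  intros Hpq dT bT cT dU bU bU' cU' dth cth bth dA cA' pA' pA.
  assert (Amon : forall x y, p <= x -> x <= y -> y <= q -> A x <= A y).
  { intros x y H1 H2 H3. apply (mono_deriv A A'); auto; intros; [apply dA|apply pA']; lra. }
  assert (Apos : forall x, p<=x<=q -> 0 <= A x <= A q).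
  { intros x Hx. split. apply Rle_trans with (A p); auto. apply Amon; lra. apply Amon; lra. }
  assert (cA : forall x, p<=x<=q -> continuous A x) by (intros; eapply cR_d; eauto).
  assert (cthx : forall x, p<=x<=q -> continuous th x) by (intros; eapply cR_d; eauto).
  assert (cT0 : forall y, continuous T y) by (intros; eapply cR_d; eauto).
  assert (cU : forall y, continuous U y) by (intros; eapply cR_d; eauto).
  assert (dsq : forall x, is_derive (fun x => x^2/2) x x).
  { intros x. auto_derive. auto. field. }
  assert (csq : forall x, continuous (fun x => x^2/2) x) by (intros; eapply cR_d; eauto).
  set (W := fun x => A x * U (th x)).
  set (W' := fun x => A' x * U (th x) + A x * (th' x * U' (th x))).
  set (g := fun x => x * T' (x^2/2) * W x).
  set (k := fun x => T (x^2/2) * W' x).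
  set (F := fun x => T (x^2/2) * W x).
  assert (cW' : forall x, p<=x<=q -> continuous W' x).
  { intros x Hx. unfold W'. apply cR_plus. apply cR_mult; auto. apply cR_comp; auto.
    apply cR_mult; auto. apply cR_mult; auto. apply cR_comp; auto. }
  assert (ck : forall x, p<=x<=q -> continuous k x).
  { intros x Hx. unfold k. apply cR_mult; auto. apply (cR_comp T (fun x => x^2/2)); auto. }
  assert (cg : forall x, p<=x<=q -> continuous g x).
  { intros x Hx. unfold g, W. apply cR_mult. apply cR_mult. apply continuous_id.
    apply (cR_comp T' (fun x => x^2/2)); auto. apply cR_mult; auto. apply cR_comp; auto. }
  assert (dF : forall x, p<=x<=q -> is_derive F x (g x + k x)).
  { intros x Hx. unfold F.
    eapply dR_eq. apply dR_mult. apply (dR_comp T (fun x => x^2/2)). apply dT. apply dsq.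
    unfold W. apply dR_mult. auto. apply dR_comp. apply dU. auto.
    unfold g, k, W, W'. ring. }
  assert (EF : RInt (fun x => g x + k x) p q = F q - F p).
  { apply RInt_deriv; auto. intros x Hx. apply cR_plus; auto. }
  rewrite RInt_plus' in EF; auto.
  assert (Eg : RInt g p q = F q - F p - RInt k p q) by lra.
  change (Rabs (RInt g p q) <= 2 * A q + Bs * RInt A p q). rewrite Eg.
  assert (HFb : forall x, p<=x<=q -> Rabs (F x) <= A x).
  { intros x Hx. unfold F, W. rewrite !Rabs_mult. specialize (bT (x^2/2)). specialize (bU (th x)).
    rewrite (Rabs_right (A x)) by (destruct (Apos x Hx); lra).
    pose proof (Rabs_pos (T (x^2/2))). pose proof (Rabs_pos (U (th x))). destruct (Apos x Hx).
    assert (Rabs (U (th x)) * A x <= A x) by nra. nra. }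
  assert (Hk : Rabs (RInt k p q) <= RInt (fun x => A' x + Bs * A x) p q).
  { apply abs_RInt_le'; auto.
    - intros x Hx. apply cR_plus; auto. apply cR_mult; auto. apply continuous_const.
    - intros x Hx. unfold k, W'. rewrite Rabs_mult.
      specialize (bT (x^2/2)). pose proof (Rabs_pos (T (x^2/2))).
      assert (Rabs (A' x * U (th x) + A x * (th' x * U' (th x))) <= A' x + Bs * A x).
      { eapply Rle_trans. apply Rabs_triang. rewrite !Rabs_mult.
        specialize (bU (th x)). specialize (bU' (th x)). specialize (bth x Hx). specialize (pA' x Hx).
        destruct (Apos x Hx).
        rewrite (Rabs_right (A' x)) by lra. rewrite (Rabs_right (A x)) by lra.
        pose proof (Rabs_pos (U (th x))). pose proof (Rabs_pos (U' (th x))). pose proof (Rabs_pos (th' x)).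
        assert (A' x * Rabs (U (th x)) <= A' x) by nra.
        assert (Rabs (th' x) * Rabs (U' (th x)) <= Bs) by nra.
        assert (A x * (Rabs (th' x) * Rabs (U' (th x))) <= A x * Bs) by nra. nra. }
      pose proof (Rabs_pos (A' x * U (th x) + A x * (th' x * U' (th x)))). nra. }
  rewrite RInt_plus' in Hk; auto. 2: { intros; apply cR_mult; auto; apply continuous_const. }
  rewrite RInt_scal' in Hk; auto. rewrite (RInt_deriv A A') in Hk; auto.
  pose proof (HFb q ltac:(lra)). pose proof (HFb p ltac:(lra)).
  unfold Rminus. eapply Rle_trans. apply Rabs_triang. rewrite Rabs_Ropp.
  eapply Rle_trans. apply Rplus_le_compat_r. apply Rabs_triang. rewrite Rabs_Ropp.
  lra.
Qed.


Definition Sc (l : nat) (rho c : nat -> R) (x : R) := sum1 (fun i => c i * sqrt (rho i - x^2)) l.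
Definition Sd (l : nat) (rho c : nat -> R) (x : R) := sum1 (fun i => c i / sqrt (rho i - x^2)) l.
Definition Th (m : nat) (sigma b : nat -> R) (x : R) := sum1 (fun j => b j * sqrt (x^2 + sigma j)) m.
Definition Hs (m : nat) (sigma b : nat -> R) (x : R) := sum1 (fun j => b j / sqrt (x^2 + sigma j)) m.
Definition Hd (m : nat) (sigma b : nat -> R) (x : R) := sum1 (fun j => b j / (sqrt (x^2 + sigma j))^3) m.
Definition Am (l k : nat) (rho c : nat -> R) (x : R) := exp (- Sc l rho c x) / sqrt (rho k - x^2).
Definition Am' (l k : nat) (rho c : nat -> R) (x : R) :=
  Am l k rho c x * x * (Sd l rho c x + / (sqrt (rho k - x^2))^2).

Lemma sqrt_ne0 a : 0 < a -> sqrt a <> 0.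
Proof. intros. apply Rgt_not_eq, sqrt_lt_R0; auto. Qed.

Lemma dSc l rho c x : (forall i, (1 <= i <= l)%nat -> x^2 < rho i) ->
  is_derive (Sc l rho c) x (- x * Sd l rho c x).
Proof.
  intros H. unfold Sd. rewrite <- sum1_scal.
  apply (sum1_derive (fun i y => c i * sqrt (rho i - y^2)) (fun i => - x * (c i / sqrt (rho i - x^2)))).
  intros j Hj. specialize (H j Hj). auto_derive. lra. replace (rho j + - (x * (x * 1))) with (rho j - x^2) by ring. field. apply sqrt_ne0; lra.
Qed.

Lemma dTh m sigma b x : (forall j, (1 <= j <= m)%nat -> 0 < x^2 + sigma j) ->
  is_derive (Th m sigma b) x (x * Hs m sigma b x).
Proof.
  intros H. unfold Hs. rewrite <- sum1_scal.
  apply (sum1_derive (fun i y => b i * sqrt (y^2 + sigma i)) (fun i => x * (b i / sqrt (x^2 + sigma i)))).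
  intros j Hj. specialize (H j Hj). auto_derive. lra. replace (x * (x * 1) + sigma j) with (x^2 + sigma j) by ring. field. apply sqrt_ne0; lra.
Qed.

Lemma dHs m sigma b x : (forall j, (1 <= j <= m)%nat -> 0 < x^2 + sigma j) ->
  is_derive (Hs m sigma b) x (- x * Hd m sigma b x).
Proof.
  intros H. unfold Hd. rewrite <- sum1_scal.
  apply (sum1_derive (fun i y => b i / sqrt (y^2 + sigma i)) (fun i => - x * (b i / (sqrt (x^2 + sigma i))^3))).
  intros j Hj. specialize (H j Hj). auto_derive. split; [lra|]. split; auto. 
  replace (x * (x * 1) + sigma j) with (x^2 + sigma j) by ring. apply sqrt_ne0; lra.
  replace (x * (x * 1) + sigma j) with (x^2 + sigma j) by ring. field. apply sqrt_ne0; lra.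
Qed.

Lemma cSd l rho c x : (forall i, (1 <= i <= l)%nat -> x^2 < rho i) -> continuous (Sd l rho c) x.
Proof.
  intros H. apply (sum1_cont (fun i y => c i / sqrt (rho i - y^2))).
  intros j Hj. specialize (H j Hj). apply cR_div. apply continuous_const.
  apply continuous_sqrt_comp. apply cR_minus. apply continuous_const. apply cR_ex. auto_derive; auto.
  apply sqrt_ne0; lra.
Qed.

Lemma cHd m sigma b x : (forall j, (1 <= j <= m)%nat -> 0 < x^2 + sigma j) -> continuous (Hd m sigma b) x.
Proof.
  intros H. apply (sum1_cont (fun i y => b i / (sqrt (y^2 + sigma i))^3)).
  intros j Hj. specialize (H j Hj). apply cR_div. apply continuous_const.
  apply cR_ex. auto_derive. lra.
  apply pow_nonzero. apply sqrt_ne0; lra.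
Qed.

Lemma cHs m sigma b x : (forall j, (1 <= j <= m)%nat -> 0 < x^2 + sigma j) -> continuous (Hs m sigma b) x.
Proof.
  intros H. eapply cR_d. apply dHs; auto.
Qed.

Lemma cSc l rho c x : continuous (Sc l rho c) x.
Proof.
  apply (sum1_cont (fun i y => c i * sqrt (rho i - y^2))).
  intros j Hj. apply cR_mult. apply continuous_const.
  apply continuous_sqrt_comp. apply cR_minus. apply continuous_const. apply cR_ex. auto_derive; auto.
Qed.

Lemma cTh m sigma b x : continuous (Th m sigma b) x.
Proof.
  apply (sum1_cont (fun i y => b i * sqrt (y^2 + sigma i))).
  intros j Hj. apply cR_mult. apply continuous_const.
  apply continuous_sqrt_comp. apply cR_plus. apply cR_ex. auto_derive; auto. apply continuous_const.
Qed.

Lemma dAm l k rho c x : (forall i, (1 <= i <= l)%nat -> x^2 < rho i) -> x^2 < rho k ->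
  is_derive (Am l k rho c) x (Am' l k rho c x).
Proof.
  intros H Hk. unfold Am, Am'.
  apply (dR_eq _ _ ((- (- x * Sd l rho c x)) * exp (- Sc l rho c x) * / sqrt (rho k - x^2)
      + exp (- Sc l rho c x) * ( - (- (2 * x) / (2 * sqrt (rho k - x^2))) / (sqrt (rho k - x^2))^2))).
  - unfold Rdiv. apply (dR_mult (fun y => exp (- Sc l rho c y)) (fun y => / sqrt (rho k - y^2))). apply (dR_comp exp (fun y => - Sc l rho c y)). apply is_derive_exp.
    apply (is_derive_opp (Sc l rho c)). apply dSc; auto.
    apply (is_derive_inv (fun y => sqrt (rho k - y^2))). auto_derive. lra. replace (rho k + - (x * (x * 1))) with (rho k - x^2) by ring. field. apply sqrt_ne0; lra. apply sqrt_ne0; lra.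
  - unfold Am. field. apply sqrt_ne0; lra.
Qed.

Lemma cAm' l k rho c x : (forall i, (1 <= i <= l)%nat -> x^2 < rho i) -> x^2 < rho k ->
  continuous (Am' l k rho c) x.
Proof.
  intros H Hk. unfold Am'. apply cR_mult. apply cR_mult. eapply cR_d. apply dAm; auto. apply continuous_id.
  apply cR_plus. apply cSd; auto. apply cR_inv.
  apply cR_ex. auto_derive. lra. apply pow_nonzero, sqrt_ne0; lra.
Qed.


Lemma ivt_val (h : R -> R) a z v : a < z -> (forall x, a <= x <= z -> continuity_pt h x) ->
  h a < v -> v < h z -> exists p, a <= p <= z /\ h p = v.
Proof.
  intros Haz Hc H1 H2.
  destruct (Ranalysis5.IVT_interv (fun x => h x - v) a z) as [p [Hp E]]; auto.
  - intros x Hx. apply continuity_pt_minus; auto. apply continuity_pt_const. intros u w; reflexivity.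
  - lra.
  - lra.
  - exists p; split; auto; lra.
Qed.

Lemma split3 (h : R -> R) a z mu : a <= z -> 0 < mu ->
  (forall x, a <= x <= z -> continuity_pt h x) ->
  (forall x y, a <= x -> x <= y -> y <= z -> h x <= h y) ->
  exists p q, a <= p <= q /\ q <= z /\
    (p = a \/ forall x, a <= x <= p -> h x <= -mu) /\
    (p = q \/ forall x, p <= x <= q -> -mu <= h x <= mu) /\
    (q = z \/ forall x, q <= x <= z -> mu <= h x).
Proof.
  intros Haz Hmu Hc Hm.
  assert (Hp : exists p, a <= p <= z /\ (p = a \/ forall x, a <= x <= p -> h x <= -mu) /\
      (p = z \/ -mu <= h p)).
  { destruct (Rle_lt_dec (-mu) (h a)).
    - exists a. split; [lra|]. split; auto.
    - destruct (Rle_lt_dec (h z) (-mu)).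
      + exists z. split; [lra|]. split; auto. right; intros x Hx. specialize (Hm x z ltac:(lra) ltac:(lra) ltac:(lra)). lra.
      + assert (a < z). { destruct (Req_dec a z); [subst; lra| lra]. }
        destruct (ivt_val h a z (-mu)) as [p [Hp1 Hp2]]; auto.
        exists p. split; auto. split. right; intros x Hx. specialize (Hm x p ltac:(lra) ltac:(lra) ltac:(lra)). lra.
        right; lra. }
  destruct Hp as [p [Hp1 [Hp2 Hp3]]].
  assert (Hq : exists q, p <= q <= z /\ (p = q \/ forall x, p <= x <= q -> h x <= mu) /\
      (q = z \/ forall x, q <= x <= z -> mu <= h x)).
  { destruct (Rle_lt_dec mu (h p)).
    - exists p. split; [lra|]. split; auto. right; intros x Hx. specialize (Hm p x ltac:(lra) ltac:(lra) ltac:(lra)). lra.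
    - destruct (Rle_lt_dec (h z) mu).
      + exists z. split; [lra|]. split; auto. right; intros x Hx. specialize (Hm x z ltac:(lra) ltac:(lra) ltac:(lra)). lra.
      + assert (p < z). { destruct (Req_dec p z); [subst; lra| lra]. }
        destruct (ivt_val h p z mu) as [q [Hq1 Hq2]]; auto. intros; apply Hc; lra.
        exists q. split; auto. split. right; intros x Hx. specialize (Hm x q ltac:(lra) ltac:(lra) ltac:(lra)). lra.
        right; intros x Hx. specialize (Hm q x ltac:(lra) ltac:(lra) ltac:(lra)). lra. }
  destruct Hq as [q [Hq1 [Hq2 Hq3]]].
  exists p, q. split; [lra|]. split; [lra|]. split; auto. split; auto.
  destruct (Req_dec p q) as [E|NE]; [left; auto|right].
  destruct Hq2 as [E|Hq2]; [contradiction|].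
  destruct Hp3 as [E|Hp3]; [lra|].
  intros x Hx. split. specialize (Hm p x ltac:(lra) ltac:(lra) ltac:(lra)). lra. apply Hq2; auto.
Qed.


Lemma inv_nonneg x : 0 <= x -> 0 <= / x.
Proof. intros H. destruct (Req_dec x 0) as [->|N]. rewrite Rinv_0; lra. left; apply Rinv_0_lt_compat; lra. Qed.

Lemma Sc_nonneg l rho c x : (forall i, (1 <= i <= l)%nat -> 0 < c i) -> 0 <= Sc l rho c x.
Proof. intros Hc. apply sum1_nonneg. intros j Hj. apply Rmult_le_pos. specialize (Hc j Hj); lra. apply sqrt_pos. Qed.

Lemma Sd_nonneg l rho c x : (forall i, (1 <= i <= l)%nat -> 0 < c i) -> 0 <= Sd l rho c x.
Proof. intros Hc. apply sum1_nonneg. intros j Hj. unfold Rdiv. apply Rmult_le_pos. specialize (Hc j Hj); lra.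
  apply inv_nonneg, sqrt_pos. Qed.

Lemma Hs_nonneg m sigma b x : (forall j, (1 <= j <= m)%nat -> 0 < b j) -> 0 <= Hs m sigma b x.
Proof. intros Hb. apply sum1_nonneg. intros j Hj. unfold Rdiv. apply Rmult_le_pos. specialize (Hb j Hj); lra.
  apply inv_nonneg, sqrt_pos. Qed.

Lemma Hd_nonneg m sigma b x : (forall j, (1 <= j <= m)%nat -> 0 < b j) -> 0 <= Hd m sigma b x.
Proof. intros Hb. apply sum1_nonneg. intros j Hj. unfold Rdiv. apply Rmult_le_pos. specialize (Hb j Hj); lra.
  apply inv_nonneg, pow_le, sqrt_pos. Qed.

Lemma Am_pos l k rho c x : x^2 < rho k -> 0 < Am l k rho c x.
Proof. intros H. unfold Am. apply Rdiv_lt_0_compat. apply exp_pos. apply sqrt_lt_R0; lra. Qed.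

Lemma exp_mono x y : x <= y -> exp x <= exp y.
Proof. intros H. destruct (Rle_lt_or_eq_dec x y H) as [L|E]. left; apply exp_increasing; auto. subst; lra. Qed.

Lemma Am_le l k rho c x : (forall i, (1 <= i <= l)%nat -> 0 < c i) ->
  x^2 < rho l -> rho l <= rho k -> Am l k rho c x <= / sqrt (rho l - x^2).
Proof.
  intros Hc H1 H2. unfold Am.
  assert (exp (- Sc l rho c x) <= 1).
  { rewrite <- exp_0. apply exp_mono. pose proof (Sc_nonneg l rho c x Hc). lra. }
  assert (0 < sqrt (rho l - x^2)) by (apply sqrt_lt_R0; lra).
  assert (sqrt (rho l - x^2) <= sqrt (rho k - x^2)) by (apply sqrt_le_1_alt; lra).
  assert (/ sqrt (rho k - x^2) <= / sqrt (rho l - x^2)) by (apply Rinv_le_contravar; lra).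
  assert (0 < / sqrt (rho k - x^2)) by (apply Rinv_0_lt_compat; lra).
  pose proof (exp_pos (- Sc l rho c x)). unfold Rdiv. nra.
Qed.

Lemma Am'_nonneg l k rho c x : (forall i, (1 <= i <= l)%nat -> 0 < c i) ->
  0 <= x -> x^2 < rho k -> 0 <= Am' l k rho c x.
Proof.
  intros Hc Hx H. unfold Am'. apply Rmult_le_pos. apply Rmult_le_pos; auto. left; apply Am_pos; auto.
  apply Rplus_le_le_0_compat. apply Sd_nonneg; auto. apply inv_nonneg, pow2_ge_0.
Qed.

Lemma Am_le_exp l k rho c x : (forall i, (1 <= i <= l)%nat -> 0 < c i) -> (1 <= k <= l)%nat ->
  x^2 < rho k -> Am l k rho c x <= exp (- (c k * sqrt (rho k - x^2))) / sqrt (rho k - x^2).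
Proof.
  intros Hc Hk H. unfold Am, Rdiv. apply Rmult_le_compat_r. left; apply Rinv_0_lt_compat, sqrt_lt_R0; lra.
  apply exp_mono. apply Ropp_le_contravar. unfold Sc.
  apply (sum1_term (fun i => c i * sqrt (rho i - x^2)) l k); auto.
  intros j Hj. apply Rmult_le_pos. specialize (Hc j Hj); lra. apply sqrt_pos.
Qed.

Lemma cAm l k rho c x : x^2 < rho k -> continuous (Am l k rho c) x.
Proof.
  intros H. unfold Am. apply cR_div. apply continuous_exp_comp. apply (continuous_opp (Sc l rho c)). apply cSc.
  apply continuous_sqrt_comp. apply cR_minus. apply continuous_const. apply cR_ex. auto_derive; auto.
  apply sqrt_ne0; lra.
Qed.

Lemma triv_bound l k rho c y z : (forall i, (1 <= i <= l)%nat -> 0 < c i) -> rho l <= rho k ->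
  0 <= y <= z -> z^2 < rho l ->
  RInt (fun x => x * Am l k rho c x) y z <= sqrt (rho l - y^2) - sqrt (rho l - z^2).
Proof.
  intros Hc Hlk Hyz Hz.
  assert (Hx2 : forall x, y <= x <= z -> x^2 < rho l).
  { intros x Hx. assert (x^2 <= z^2) by (apply pow_incr; lra). lra. }
  apply Rle_trans with (RInt (fun x => x / sqrt (rho l - x^2)) y z).
  - apply RInt_le'; try lra.
    + intros x Hx. apply cR_mult. apply continuous_id. apply cAm. specialize (Hx2 x Hx). lra.
    + intros x Hx. specialize (Hx2 x Hx). apply cR_div. apply continuous_id.
      apply continuous_sqrt_comp. apply cR_minus. apply continuous_const. apply cR_ex. auto_derive; auto.
      apply sqrt_ne0; lra.
    + intros x Hx. specialize (Hx2 x Hx). unfold Rdiv. apply Rmult_le_compat_l. lra. apply Am_le; auto.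
  - rewrite (RInt_deriv (fun x => - sqrt (rho l - x^2))). lra. lra.
    + intros x Hx. specialize (Hx2 x Hx). auto_derive. lra. replace (rho l + - (x * (x * 1))) with (rho l - x^2) by ring.
      field. apply sqrt_ne0; lra.
    + intros x Hx. specialize (Hx2 x Hx). apply cR_div. apply continuous_id.
      apply continuous_sqrt_comp. apply cR_minus. apply continuous_const. apply cR_ex. auto_derive; auto.
      apply sqrt_ne0; lra.
Qed.

Lemma exp_bound l k rho c y z : (forall i, (1 <= i <= l)%nat -> 0 < c i) -> (1 <= k <= l)%nat -> rho l <= rho k ->
  0 <= y <= z -> z^2 < rho l ->
  RInt (fun x => x * Am l k rho c x) y z <= / c k.
Proof.
  intros Hc Hk Hlk Hyz Hz. pose proof (Hc k Hk) as ck.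
  assert (Hx2 : forall x, y <= x <= z -> x^2 < rho k).
  { intros x Hx. assert (x^2 <= z^2) by (apply pow_incr; lra). lra. }
  set (df := fun x => x * (exp (- (c k * sqrt (rho k - x^2))) / sqrt (rho k - x^2))).
  assert (cdf : forall x, y <= x <= z -> continuous df x).
  { intros x Hx. specialize (Hx2 x Hx). unfold df. apply cR_mult. apply continuous_id. apply cR_div.
    apply cR_ex. auto_derive. lra.
    apply continuous_sqrt_comp. apply cR_minus. apply continuous_const. apply cR_ex. auto_derive; auto.
    apply sqrt_ne0; lra. }
  apply Rle_trans with (RInt df y z).
  - apply RInt_le'; try lra; auto.
    + intros x Hx. apply cR_mult. apply continuous_id. apply cAm. specialize (Hx2 x Hx). lra.
    + intros x Hx. specialize (Hx2 x Hx). unfold df. apply Rmult_le_compat_l. lra. apply Am_le_exp; auto.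
  - rewrite (RInt_deriv (fun x => / c k * exp (- (c k * sqrt (rho k - x^2)))) df); auto; try lra.
    + pose proof (exp_pos (- (c k * sqrt (rho k - y ^ 2)))).
      assert (exp (- (c k * sqrt (rho k - z ^ 2))) <= 1).
      { rewrite <- exp_0. apply exp_mono. pose proof (sqrt_pos (rho k - z^2)). nra. }
      assert (0 < / c k) by (apply Rinv_0_lt_compat; lra). nra.
    + intros x Hx. specialize (Hx2 x Hx). unfold df. auto_derive. lra.
      replace (rho k + - (x * (x * 1))) with (rho k - x^2) by ring. field. split. apply sqrt_ne0; lra. lra.
Qed.


Definition HypP m l (sigma rho b c : nat -> R) k (eps : R) :=
 (1 <= m)%nat /\ (1 <= l)%nat /\ (1 <= k <= l)%nat /\ (eps = 1 \/ eps = -1) /\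
 (forall i, (1 <= i <= l)%nat -> rho l <= rho i) /\ 0 < rho l /\
 (forall j, (1 <= j <= m)%nat -> 0 <= sigma j <= sigma 1%nat) /\
 (forall j, (1 <= j <= m)%nat -> 0 < b j) /\ (forall i, (1 <= i <= l)%nat -> 0 < c i).

Definition psi m sigma b eps x := x^2/2 + eps * Th m sigma b x.
Definition gT (T' : R -> R) m l sigma rho b c k eps x :=
  x * Am l k rho c x * T' (psi m sigma b eps x).

Lemma cgT T' m l sigma rho b c k eps x : (forall y, continuous T' y) -> x^2 < rho k ->
  continuous (gT T' m l sigma rho b c k eps) x.
Proof.
  intros cT H. unfold gT. apply cR_mult. apply cR_mult. apply continuous_id. apply cAm; auto.
  apply cR_comp; auto. unfold psi. apply cR_plus. apply cR_ex; auto_derive; auto.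
  apply cR_mult. apply continuous_const. apply cTh.
Qed.

Lemma abs_gT T' m l sigma rho b c k eps y z : HypP m l sigma rho b c k eps ->
  (forall y, continuous T' y) -> (forall y, Rabs (T' y) <= 1) ->
  0 <= y <= z -> z^2 < rho l ->
  Rabs (RInt (gT T' m l sigma rho b c k eps) y z) <= RInt (fun x => x * Am l k rho c x) y z.
Proof.
  intros HP cT bT Hyz Hz. destruct HP as (Hm & Hl & Hk & Heps & Hrho & Hrl & Hsig & Hb & Hc).
  pose proof (Hrho k Hk).
  assert (Hx2 : forall x, y <= x <= z -> x^2 < rho l).
  { intros x Hx. assert (x^2 <= z^2) by (apply pow_incr; lra). lra. }
  apply abs_RInt_le'; try lra.
  - intros x Hx. apply cgT; auto. specialize (Hx2 x Hx); lra.
  - intros x Hx. apply cR_mult. apply continuous_id. apply cAm. specialize (Hx2 x Hx); lra.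
  - intros x Hx. unfold gT. rewrite Rabs_mult. specialize (bT (psi m sigma b eps x)).
    pose proof (Rabs_pos (T' (psi m sigma b eps x))).
    rewrite Rabs_right. 2: { apply Rle_ge, Rmult_le_pos. lra. left; apply Am_pos. specialize (Hx2 x Hx); lra. }
    assert (0 <= x * Am l k rho c x). { apply Rmult_le_pos. lra. left; apply Am_pos. specialize (Hx2 x Hx); lra. }
    nra.
Qed.

Lemma gT_split T' m l sigma rho b c k eps p q r : HypP m l sigma rho b c k eps ->
  (forall y, continuous T' y) -> 0 <= p <= q -> q <= r -> r^2 < rho l ->
  RInt (gT T' m l sigma rho b c k eps) p r =
  RInt (gT T' m l sigma rho b c k eps) p q + RInt (gT T' m l sigma rho b c k eps) q r.
Proof.
  intros HP cT Hpq Hqr Hr. destruct HP as (Hm & Hl & Hk & Heps & Hrho & Hrl & Hsig & Hb & Hc).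
  pose proof (Hrho k Hk).
  apply RInt_split; try lra. intros x Hx. apply cgT; auto.
  assert (x^2 <= r^2) by (apply pow_incr; lra). lra.
Qed.

Lemma Hd_ge m sigma b x : (forall j, (1 <= j <= m)%nat -> 0 < b j) ->
  (forall j, (1 <= j <= m)%nat -> 0 <= sigma j <= sigma 1%nat) -> 0 < x ->
  Hs m sigma b x / (x^2 + sigma 1%nat) <= Hd m sigma b x.
Proof.
  intros Hb Hsig Hx. unfold Rdiv. rewrite Rmult_comm. unfold Hs, Hd. rewrite <- sum1_scal.
  apply sum1_le. intros j Hj. specialize (Hb j Hj). specialize (Hsig j Hj).
  assert (Hu : 0 < x^2 + sigma j) by nra.
  assert (0 < sqrt (x^2 + sigma j)) by (apply sqrt_lt_R0; lra).
  replace (sqrt (x^2 + sigma j) ^ 3) with (sqrt (x^2 + sigma j) * (x^2 + sigma j)).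
  2: { rewrite <- (sqrt_sqrt (x^2 + sigma j)) at 2 by lra. ring. }
  assert (x^2 + sigma j <= x^2 + sigma 1%nat) by lra.
  unfold Rdiv. rewrite Rinv_mult.
  assert (/ (x^2 + sigma 1%nat) <= / (x^2 + sigma j)) by (apply Rinv_le_contravar; lra).
  assert (0 < / sqrt (x^2 + sigma j)) by (apply Rinv_0_lt_compat; lra).
  match goal with |- ?L <= ?R => 
    replace L with ((b j * / sqrt (x^2 + sigma j)) * / (x^2 + sigma 1%nat)) by ring;
    replace R with ((b j * / sqrt (x^2 + sigma j)) * / (x^2 + sigma j)) by ring end.
  apply Rmult_le_compat_l; auto. nra.
Qed.

Lemma RInt0 (f : R -> R) a : RInt f a a = 0.
Proof. exact (RInt_point a f). Qed.

Lemma hyps_at m l sigma rho b c k eps x : HypP m l sigma rho b c k eps -> 0 < x -> x^2 < rho l ->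
  (forall i, (1 <= i <= l)%nat -> x^2 < rho i) /\ (forall j, (1 <= j <= m)%nat -> 0 < x^2 + sigma j) /\ x^2 < rho k.
Proof.
  intros HP Hx H. destruct HP as (Hm & Hl & Hk & Heps & Hrho & Hrl & Hsig & Hb & Hc).
  split; [|split].
  - intros i Hi. specialize (Hrho i Hi). lra.
  - intros j Hj. specialize (Hsig j Hj). nra.
  - specialize (Hrho k Hk). lra.
Qed.

Lemma dpsi m l sigma rho b c k eps x : HypP m l sigma rho b c k eps -> 0 < x -> x^2 < rho l ->
  is_derive (psi m sigma b eps) x (x * (1 + eps * Hs m sigma b x)).
Proof.
  intros HP Hx H. destruct (hyps_at m l sigma rho b c k eps x HP Hx H) as (H1 & H2 & H3).
  unfold psi. eapply dR_eq. apply dR_plus. apply (is_derive_ext (fun x => x^2/2)). reflexivity.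
  auto_derive; auto. apply (is_derive_scal (Th m sigma b)). apply dTh; auto. field.
Qed.

Lemma dh m l sigma rho b c k eps x : HypP m l sigma rho b c k eps -> 0 < x -> x^2 < rho l ->
  is_derive (fun y => 1 + eps * Hs m sigma b y) x (eps * (- x * Hd m sigma b x)).
Proof.
  intros HP Hx H. destruct (hyps_at m l sigma rho b c k eps x HP Hx H) as (H1 & H2 & H3).
  eapply dR_eq. apply dR_plus. apply (is_derive_const 1). apply (is_derive_scal (Hs m sigma b)). apply dHs; auto. unfold zero; simpl; ring.
Qed.

Lemma A_bound (T T' : R -> R) m l sigma rho b c k eps z : HypP m l sigma rho b c k eps ->
  (forall y, is_derive T y (T' y)) -> (forall y, Rabs (T y) <= 1) ->
  (forall y, continuous T' y) -> (forall y, Rabs (T' y) <= 1) ->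
  16 < rho l -> 1 <= z -> z^2 <= rho l - sqrt (rho l + sigma 1%nat) ->
  Rabs (RInt (gT T' m l sigma rho b c k eps) 1 z) <= 12 * sqrt (sqrt (rho l + sigma 1%nat)).
Proof.
  intros HP dT bT cT bT' H16 Hz1 Hz2.
  pose proof HP as HP'. destruct HP' as (Hm & Hl & Hk & Heps & Hrho & Hrl & Hsig & Hb & Hc).
  set (S := rho l + sigma 1%nat) in *.
  assert (HS : 16 < S). { assert (0 <= sigma 1%nat) by (apply (Hsig 1%nat); lia). unfold S; lra. }
  set (r := sqrt (sqrt S)).
  assert (Hr2 : r^2 = sqrt S) by (apply pow2_sqrt, sqrt_pos).
  assert (Hr4 : r^4 = S). { replace (r^4) with ((r^2)^2) by ring. rewrite Hr2. apply pow2_sqrt; lra. }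
  assert (Hr : 2 <= r).
  { assert (4 <= sqrt S). { rewrite <- (sqrt_pow2 4) by lra. apply sqrt_le_1_alt. lra. }
    unfold r. rewrite <- (sqrt_pow2 2) by lra. apply sqrt_le_1_alt. lra. }
  rewrite <- Hr2 in Hz2. fold r.
  assert (Hx : forall x, 1 <= x <= z -> 0 < x /\ x^2 < rho l /\ x^2 <= rho l - r^2).
  { intros x Hx. assert (x^2 <= z^2) by (apply pow_incr; lra). nra. }
  assert (HAm : forall x, 1 <= x <= z -> Am l k rho c x <= / r).
  { intros x Hx0. destruct (Hx x Hx0) as (Hx1 & Hx2 & Hx3).
    eapply Rle_trans. apply (Am_le l k rho c x Hc Hx2 (Hrho k Hk)).
    apply Rinv_le_contravar. lra. rewrite <- (sqrt_pow2 r) by lra. apply sqrt_le_1_alt. lra. }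
  set (h := fun y => 1 + eps * Hs m sigma b y).
  set (h' := fun y => eps * (- y * Hd m sigma b y)).
  assert (Hpiece : forall p q mu, 1 <= p <= q -> q <= z -> 0 < mu ->
     ((forall x, p<=x<=q -> mu <= h x) \/ (forall x, p<=x<=q -> h x <= -mu)) ->
     ((forall x, p<=x<=q -> 0 <= h' x) \/ (forall x, p<=x<=q -> h' x <= 0)) ->
     Rabs (RInt (gT T' m l sigma rho b c k eps) p q) <= 4 * Am l k rho c q / mu).
  { intros p q mu Hpq Hqz Hmu Hsg Hsg'.
    apply (piece T T' (psi m sigma b eps) h h' (Am l k rho c) (Am' l k rho c) p q mu); auto; try lra.
    - intros x Hx0. destruct (Hx x ltac:(lra)) as (Hx1 & Hx2 & Hx3). apply (dpsi m l sigma rho b c k eps); auto.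
    - intros x Hx0. destruct (Hx x ltac:(lra)) as (Hx1 & Hx2 & Hx3). apply (dh m l sigma rho b c k eps); auto.
    - intros x Hx0. destruct (Hx x ltac:(lra)) as (Hx1 & Hx2 & Hx3).
      destruct (hyps_at m l sigma rho b c k eps x HP Hx1 Hx2) as (H1 & H2 & H3). apply dAm; auto.
    - intros x Hx0. destruct (Hx x ltac:(lra)) as (Hx1 & Hx2 & Hx3).
      destruct (hyps_at m l sigma rho b c k eps x HP Hx1 Hx2) as (H1 & H2 & H3).
      unfold h'. apply cR_mult. apply continuous_const. apply cR_mult. apply cR_ex; auto_derive; auto.
      apply cHd; auto.
    - intros x Hx0. destruct (Hx x ltac:(lra)) as (Hx1 & Hx2 & Hx3).
      destruct (hyps_at m l sigma rho b c k eps x HP Hx1 Hx2) as (H1 & H2 & H3). apply cAm'; auto.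
    - intros x Hx0. destruct (Hx x ltac:(lra)) as (Hx1 & Hx2 & Hx3).
      destruct (hyps_at m l sigma rho b c k eps x HP Hx1 Hx2) as (H1 & H2 & H3). apply Am'_nonneg; auto. lra.
    - destruct (Hx p ltac:(lra)) as (Hx1 & Hx2 & Hx3). left. apply Am_pos.
      specialize (Hrho k Hk). lra. }
  destruct Heps as [E|E].
  -
    eapply Rle_trans. apply (Hpiece 1 z 1); try lra.
    + left. intros x Hx0. unfold h. rewrite E. pose proof (Hs_nonneg m sigma b x Hb). lra.
    + right. intros x Hx0. unfold h'. rewrite E. pose proof (Hd_nonneg m sigma b x Hb). nra.
    + specialize (HAm z ltac:(lra)). assert (/ r <= / 2) by (apply Rinv_le_contravar; lra). lra.
  -
    assert (Hr2p : 4 <= r^2) by nra.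
    set (mu := / r^2).
    assert (Hmu : 0 < mu) by (apply Rinv_0_lt_compat; lra).
    assert (Hmur : mu * r^2 = 1) by (unfold mu; field; lra).
    assert (Hmu4 : mu <= / 4) by (apply Rinv_le_contravar; lra).
    assert (Hh'pos : forall x, 1 <= x <= z -> 0 <= h' x).
    { intros x Hx0. unfold h'. rewrite E. pose proof (Hd_nonneg m sigma b x Hb). nra. }
    assert (Hdh : forall x, 1 <= x <= z -> is_derive h x (h' x)).
    { intros x Hx0. destruct (Hx x Hx0) as (Hx1 & Hx2 & Hx3). apply (dh m l sigma rho b c k eps); auto. }
    assert (hinc : forall x y, 1 <= x -> x <= y -> y <= z -> h x <= h y).
    { intros x y H1 H2 H3. apply (mono_deriv h h'); auto; intros; [apply Hdh|apply Hh'pos]; lra. }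
    assert (hcont : forall x, 1 <= x <= z -> continuity_pt h x).
    { intros x Hx0. apply continuity_pt_filterlim. eapply cR_d. apply Hdh; auto. }
    destruct (split3 h 1 z mu Hz1 Hmu hcont hinc) as (p & q & Hpq & Hqz & P1 & P2 & P3).
    assert (Hz2' : z^2 < rho l) by (destruct (Hx z ltac:(lra)); tauto).
    rewrite (gT_split T' m l sigma rho b c k eps 1 p z); auto; try lra.
    rewrite (gT_split T' m l sigma rho b c k eps p q z); auto; try lra.
    assert (B1 : Rabs (RInt (gT T' m l sigma rho b c k eps) 1 p) <= 4 * r).
    { destruct P1 as [E1|P1]. rewrite E1, RInt0, Rabs_R0. lra.
      eapply Rle_trans. apply (Hpiece 1 p mu); [lra|lra|lra|right; exact P1|left; intros; apply Hh'pos; lra].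
      specialize (HAm p ltac:(lra)). assert (0 < Am l k rho c p) by (apply Am_pos; specialize (Hrho k Hk); destruct (Hx p ltac:(lra)); lra).
      unfold Rdiv. replace (/ mu) with (r^2) by (unfold mu; field; lra).
      assert (Am l k rho c p * r <= 1). { apply Rmult_le_reg_r with (/ r). apply Rinv_0_lt_compat; lra.
        rewrite Rmult_assoc, Rinv_r, Rmult_1_l, Rmult_1_r by lra. auto. }
      nra. }
    assert (B3 : Rabs (RInt (gT T' m l sigma rho b c k eps) q z) <= 4 * r).
    { destruct P3 as [E3|P3]. rewrite E3, RInt0, Rabs_R0. lra.
      eapply Rle_trans. apply (Hpiece q z mu); [lra|lra|lra|left; exact P3|left; intros; apply Hh'pos; lra].
      specialize (HAm z ltac:(lra)). assert (0 < Am l k rho c z) by (apply Am_pos; specialize (Hrho k Hk); lra).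
      unfold Rdiv. replace (/ mu) with (r^2) by (unfold mu; field; lra).
      assert (Am l k rho c z * r <= 1). { apply Rmult_le_reg_r with (/ r). apply Rinv_0_lt_compat; lra.
        rewrite Rmult_assoc, Rinv_r, Rmult_1_l, Rmult_1_r by lra. auto. }
      nra. }
    assert (B2 : Rabs (RInt (gT T' m l sigma rho b c k eps) p q) <= 4 * r).
    { destruct P2 as [E2|P2]. rewrite E2, RInt0, Rabs_R0. lra.
      eapply Rle_trans. apply abs_gT; auto; try lra. destruct (Hx q ltac:(lra)); tauto.
      assert (Hsq : q^2 - p^2 <= 8 * r^2).
      { assert (Hmon : h p - p^2 / (4 * S) <= h q - q^2 / (4 * S)).
        { apply (mono_deriv (fun x => h x - x^2 / (4 * S)) (fun x => h' x - x / (2 * S))). lra.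
          - intros x Hx0. eapply dR_eq. apply dR_minus. apply Hdh; lra. auto_derive; auto. field. lra.
          - intros x Hx0. destruct (Hx x ltac:(lra)) as (Hx1 & Hx2 & Hx3).
            specialize (P2 x Hx0).
            assert (HHs : Hs m sigma b x = 1 - h x) by (unfold h; rewrite E; ring).
            pose proof (Hd_ge m sigma b x Hb Hsig Hx1) as HG.
            assert (Hs1 : 0 <= sigma 1%nat) by (apply (Hsig 1%nat); lia).
            assert (Hden : x^2 + sigma 1%nat <= S) by (unfold S; lra).
            assert (Hden0 : 0 < x^2 + sigma 1%nat) by nra.
            assert (Hd1 : / (2 * S) <= Hd m sigma b x).
            { eapply Rle_trans; [|apply HG]. unfold Rdiv.
              assert (/ S <= / (x^2 + sigma 1%nat)) by (apply Rinv_le_contravar; lra).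
              assert (0 < / S) by (apply Rinv_0_lt_compat; lra).
              assert (/ (2 * S) = / 2 * / S) by (field; lra). nra. }
            unfold h'. rewrite E.
            assert (x / (2 * S) = x * / (2 * S)) by reflexivity. nra. }
        assert (h q - h p <= 2 * mu).
        { destruct (P2 q ltac:(lra)). destruct (P2 p ltac:(lra)). lra. }
        assert (q^2 - p^2 <= 4 * S * (h q - h p)).
        { assert (E4 : q^2/(4*S) - p^2/(4*S) <= h q - h p) by lra.
          replace (q^2 - p^2) with (4 * S * (q^2/(4*S) - p^2/(4*S))) by (field; lra). nra. }
        assert (4 * S * (2 * mu) = 8 * r^2). { rewrite <- Hr4. unfold mu. field. lra. }
        nra. }
      apply Rle_trans with (RInt (fun x => x * / r) p q).
      - apply RInt_le'; try lra.
        + intros x Hx0. apply cR_mult. apply continuous_id. apply cAm. destruct (Hx x ltac:(lra)). specialize (Hrho k Hk). lra.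
        + intros x Hx0. apply cR_mult. apply continuous_id. apply continuous_const.
        + intros x Hx0. apply Rmult_le_compat_l. lra. apply HAm; lra.
      - rewrite (RInt_deriv (fun x => x^2 / (2 * r))). 2: lra.
        2: { intros x Hx0. auto_derive; auto. field. lra. }
        2: { intros x Hx0. apply cR_mult. apply continuous_id. apply continuous_const. }
        assert ((q^2/(2*r) - p^2/(2*r)) = (q^2 - p^2) / (2 * r)) by (field; lra).
        rewrite H. apply Rmult_le_reg_r with (2 * r). lra.
        unfold Rdiv. rewrite Rmult_assoc, Rinv_l by lra. nra. }
    eapply Rle_trans. apply Rabs_triang. eapply Rle_trans. apply Rplus_le_compat_l. apply Rabs_triang.
    lra.
Qed.


Lemma xHs_le m sigma b x : (forall j, (1 <= j <= m)%nat -> 0 < b j) ->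
  (forall j, (1 <= j <= m)%nat -> 0 <= sigma j <= sigma 1%nat) -> 0 < x ->
  x * Hs m sigma b x <= sum1 b m.
Proof.
  intros Hb Hsig Hx. unfold Hs. rewrite <- sum1_scal. apply sum1_le. intros j Hj.
  specialize (Hb j Hj). specialize (Hsig j Hj).
  assert (x <= sqrt (x^2 + sigma j)). { rewrite <- (sqrt_pow2 x) at 1 by lra. apply sqrt_le_1_alt. lra. }
  assert (0 < sqrt (x^2 + sigma j)) by lra.
  replace (x * (b j / sqrt (x^2 + sigma j))) with (b j * (x / sqrt (x^2 + sigma j))) by (field; lra).
  assert (x / sqrt (x^2 + sigma j) <= 1).
  { apply Rmult_le_reg_r with (sqrt (x^2 + sigma j)); auto. unfold Rdiv. rewrite Rmult_assoc, Rinv_l; lra. }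
  nra.
Qed.

Lemma B_piece (T1 T1' U1 U1' : R -> R) m l sigma rho b c k eps z : HypP m l sigma rho b c k eps ->
  (forall y, is_derive T1 y (T1' y)) -> (forall y, Rabs (T1 y) <= 1) -> (forall y, continuous T1' y) ->
  (forall y, is_derive U1 y (U1' y)) -> (forall y, Rabs (U1 y) <= 1) ->
  (forall y, Rabs (U1' y) <= 1) -> (forall y, continuous U1' y) ->
  16 < rho l -> 1 <= z -> z^2 <= rho l - 1 ->
  Rabs (RInt (fun x => x * T1' (x^2/2) * (Am l k rho c x * U1 (eps * Th m sigma b x))) 1 z)
    <= 2 + sum1 b m / c k.
Proof.
  intros HP dT bT cT dU bU bU' cU' H16 Hz1 Hz2.
  pose proof HP as HP'. destruct HP' as (Hm & Hl & Hk & Heps & Hrho & Hrl & Hsig & Hb & Hc).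
  assert (Hx : forall x, 1 <= x <= z -> 0 < x /\ x^2 < rho l).
  { intros x Hx. assert (x^2 <= z^2) by (apply pow_incr; lra). nra. }
  assert (HBs : 0 <= sum1 b m) by (apply sum1_nonneg; intros j Hj; specialize (Hb j Hj); lra).
  eapply Rle_trans.
  apply (piece2 T1 T1' U1 U1' (fun x => eps * Th m sigma b x) (fun x => eps * (x * Hs m sigma b x))
     (Am l k rho c) (Am' l k rho c) 1 z (sum1 b m)); auto.
  - intros x Hx0. destruct (Hx x Hx0) as (Hx1 & Hx2).
    destruct (hyps_at m l sigma rho b c k eps x HP Hx1 Hx2) as (H1 & H2 & H3).
    apply (is_derive_scal (Th m sigma b)). apply dTh; auto.
  - intros x Hx0. destruct (Hx x Hx0) as (Hx1 & Hx2).
    destruct (hyps_at m l sigma rho b c k eps x HP Hx1 Hx2) as (H1 & H2 & H3).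
    apply cR_mult. apply continuous_const. apply cR_mult. apply continuous_id. apply cHs; auto.
  - intros x Hx0. destruct (Hx x Hx0) as (Hx1 & Hx2).
    rewrite Rabs_mult. assert (Rabs eps = 1) by (destruct Heps; subst; unfold Rabs; destruct Rcase_abs; lra).
    rewrite H. rewrite Rabs_right. pose proof (xHs_le m sigma b x Hb Hsig Hx1). lra.
    apply Rle_ge, Rmult_le_pos. lra. apply Hs_nonneg; auto.
  - intros x Hx0. destruct (Hx x Hx0) as (Hx1 & Hx2).
    destruct (hyps_at m l sigma rho b c k eps x HP Hx1 Hx2) as (H1 & H2 & H3). apply dAm; auto.
  - intros x Hx0. destruct (Hx x Hx0) as (Hx1 & Hx2).
    destruct (hyps_at m l sigma rho b c k eps x HP Hx1 Hx2) as (H1 & H2 & H3). apply cAm'; auto.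
  - intros x Hx0. destruct (Hx x Hx0) as (Hx1 & Hx2).
    destruct (hyps_at m l sigma rho b c k eps x HP Hx1 Hx2) as (H1 & H2 & H3). apply Am'_nonneg; auto. lra.
  - left. apply Am_pos. specialize (Hrho k Hk). lra.
  - destruct (Hx z ltac:(lra)) as (Hz3 & Hz4).
    assert (HAz : Am l k rho c z <= 1).
    { eapply Rle_trans. apply (Am_le l k rho c z Hc Hz4 (Hrho k Hk)).
      rewrite <- Rinv_1. apply Rinv_le_contravar. lra. rewrite <- sqrt_1. apply sqrt_le_1_alt. lra. }
    assert (HI : RInt (Am l k rho c) 1 z <= / c k).
    { eapply Rle_trans. 2: apply (exp_bound l k rho c 1 z); auto; try lra.
      apply RInt_le'; try lra.
      + intros x Hx0. apply cAm. destruct (Hx x Hx0). specialize (Hrho k Hk). lra.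
      + intros x Hx0. apply cR_mult. apply continuous_id. apply cAm. destruct (Hx x Hx0). specialize (Hrho k Hk). lra.
      + intros x Hx0. destruct (Hx x Hx0). assert (0 < Am l k rho c x) by (apply Am_pos; specialize (Hrho k Hk); lra). nra. }
    unfold Rdiv. assert (sum1 b m * RInt (Am l k rho c) 1 z <= sum1 b m * / c k) by (apply Rmult_le_compat_l; auto).
    lra.
Qed.

Lemma B_bound (T' T1 T1' U1 U1' T2 T2' U2 U2' : R -> R) m l sigma rho b c k eps z :
  HypP m l sigma rho b c k eps ->
  (forall a t, T' (a + t) = T1' a * U1 t + T2' a * U2 t) ->
  (forall y, is_derive T1 y (T1' y)) -> (forall y, Rabs (T1 y) <= 1) -> (forall y, continuous T1' y) ->
  (forall y, is_derive U1 y (U1' y)) -> (forall y, Rabs (U1 y) <= 1) ->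
  (forall y, Rabs (U1' y) <= 1) -> (forall y, continuous U1' y) ->
  (forall y, is_derive T2 y (T2' y)) -> (forall y, Rabs (T2 y) <= 1) -> (forall y, continuous T2' y) ->
  (forall y, is_derive U2 y (U2' y)) -> (forall y, Rabs (U2 y) <= 1) ->
  (forall y, Rabs (U2' y) <= 1) -> (forall y, continuous U2' y) ->
  16 < rho l -> 1 <= z -> z^2 <= rho l - 1 ->
  Rabs (RInt (gT T' m l sigma rho b c k eps) 1 z) <= 4 + 2 * (sum1 b m / c k).
Proof.
  intros HP HT dT1 bT1 cT1 dU1 bU1 bU1' cU1' dT2 bT2 cT2 dU2 bU2 bU2' cU2' H16 Hz1 Hz2.
  pose proof HP as HP'. destruct HP' as (Hm & Hl & Hk & Heps & Hrho & Hrl & Hsig & Hb & Hc).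
  assert (Hx : forall x, 1 <= x <= z -> x^2 < rho k).
  { intros x Hx. assert (x^2 <= z^2) by (apply pow_incr; lra). specialize (Hrho k Hk). nra. }
  set (t1 := fun x => x * T1' (x^2/2) * (Am l k rho c x * U1 (eps * Th m sigma b x))).
  set (t2 := fun x => x * T2' (x^2/2) * (Am l k rho c x * U2 (eps * Th m sigma b x))).
  assert (ct : forall (Ti' Ui : R -> R), (forall y, continuous Ti' y) -> (forall y, continuous Ui y) ->
    forall x, 1 <= x <= z -> continuous (fun x => x * Ti' (x^2/2) * (Am l k rho c x * Ui (eps * Th m sigma b x))) x).
  { intros Ti' Ui cTi cUi x Hx0. apply cR_mult. apply cR_mult. apply continuous_id.
    apply (cR_comp Ti' (fun x => x^2/2)). apply cR_ex; auto_derive; auto. auto.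
    apply cR_mult. apply cAm; auto. apply cR_comp; auto. apply cR_mult. apply continuous_const. apply cTh. }
  assert (cU1 : forall y, continuous U1 y) by (intros; eapply cR_d; eauto).
  assert (cU2 : forall y, continuous U2 y) by (intros; eapply cR_d; eauto).
  rewrite (RInt_ext' _ (fun x => t1 x + t2 x)); try lra.
  2: { intros x Hx0. unfold gT, psi, t1, t2. rewrite HT. ring. }
  rewrite RInt_plus'; try lra. 2,3: apply ct; auto.
  eapply Rle_trans. apply Rabs_triang.
  pose proof (B_piece T1 T1' U1 U1' m l sigma rho b c k eps z HP dT1 bT1 cT1 dU1 bU1 bU1' cU1' H16 Hz1 Hz2).
  pose proof (B_piece T2 T2' U2 U2' m l sigma rho b c k eps z HP dT2 bT2 cT2 dU2 bU2 bU2' cU2' H16 Hz1 Hz2).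
  unfold t1, t2. lra.
Qed.


Lemma Rpower_quarter x : 0 < x -> Rpower x (1/4) = sqrt (sqrt x).
Proof.
  intros H. replace (1/4) with (/2 * /2) by field. rewrite <- Rpower_mult.
  rewrite (Rpower_sqrt x H). apply Rpower_sqrt. apply sqrt_lt_R0; auto.
Qed.

Lemma sum1_const (M : R) n : sum1 (fun _ => M) n = INR n * M.
Proof. induction n; cbn [sum1]; [simpl; ring|]. rewrite IHn, S_INR. ring. Qed.

Lemma sqrt_diff1 rho : 1 <= rho -> sqrt rho - sqrt (rho - 1) <= 1.
Proof.
  intros H. assert (0 <= sqrt (rho - 1)) by apply sqrt_pos.
  assert (sqrt rho <= sqrt (rho - 1) + 1).
  { rewrite <- (sqrt_pow2 (sqrt (rho - 1) + 1)) by lra. apply sqrt_le_1_alt.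
    replace ((sqrt (rho - 1) + 1)^2) with (sqrt (rho - 1)^2 + 2 * sqrt (rho - 1) + 1) by ring.
    rewrite pow2_sqrt by lra. lra. }
  lra.
Qed.



Lemma Apow_ge m l sigma rho b c k eps : HypP m l sigma rho b c k eps ->
  1 <= Rpower (1 + sigma 1%nat + rho l) (1/4) /\
  sqrt (sqrt (rho l + sigma 1%nat)) <= Rpower (1 + sigma 1%nat + rho l) (1/4).
Proof.
  intros HP. destruct HP as (Hm & Hl & Hk & Heps & Hrho & Hrl & Hsig & Hb & Hc).
  assert (0 <= sigma 1%nat) by (apply (Hsig 1%nat); lia).
  rewrite Rpower_quarter by lra. split.
  - rewrite <- sqrt_1 at 1. apply sqrt_le_1_alt. rewrite <- sqrt_1 at 1. apply sqrt_le_1_alt. lra.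
  - apply sqrt_le_1_alt. apply sqrt_le_1_alt. lra.
Qed.

Lemma Bpow_ge m l sigma rho b c k eps : HypP m l sigma rho b c k eps ->
  1 <= Rpower (INR m) (3/2) * / c k * max1 (fun j => max1 (fun i => b j + c i) l) m /\
  sum1 b m / c k <= Rpower (INR m) (3/2) * / c k * max1 (fun j => max1 (fun i => b j + c i) l) m.
Proof.
  intros HP. destruct HP as (Hm & Hl & Hk & Heps & Hrho & Hrl & Hsig & Hb & Hc).
  set (M := max1 (fun j => max1 (fun i => b j + c i) l) m).
  assert (HbM : forall j, (1 <= j <= m)%nat -> b j + c k <= M).
  { intros j Hj. unfold M. eapply Rle_trans. 2: apply (max1_ge (fun j => max1 (fun i => b j + c i) l) m j Hj).
    apply (max1_ge (fun i => b j + c i) l k Hk). }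
  assert (Hck : 0 < c k) by auto.
  assert (HcM : c k <= M). { specialize (HbM 1%nat ltac:(lia)). specialize (Hb 1%nat ltac:(lia)). lra. }
  assert (Hm1 : 1 <= INR m) by (apply (le_INR 1); lia).
  assert (HP1 : INR m <= Rpower (INR m) (3/2)).
  { rewrite <- (Rpower_1 (INR m)) at 1 by lra. apply Rle_Rpower; lra. }
  assert (HMc : 1 <= / c k * M).
  { apply Rmult_le_reg_l with (c k); auto. rewrite <- Rmult_assoc, Rinv_r, Rmult_1_l; lra. }
  split.
  - rewrite Rmult_assoc. nra.
  - assert (Hs : sum1 b m <= INR m * M).
    { rewrite <- sum1_const. apply sum1_le. intros j Hj. specialize (HbM j Hj). lra. }
    unfold Rdiv. rewrite Rmult_assoc.
    assert (0 < / c k) by (apply Rinv_0_lt_compat; auto).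
    assert (sum1 b m * / c k <= INR m * M * / c k) by (apply Rmult_le_compat_r; lra).
    assert (0 <= M * / c k) by nra.
    nra.
Qed.

Lemma comp_bound (T T' T1 T1' U1 U1' T2 T2' U2 U2' : R -> R) m l sigma rho b c k eps bb :
  HypP m l sigma rho b c k eps ->
  (forall y, is_derive T y (T' y)) -> (forall y, Rabs (T y) <= 1) ->
  (forall y, continuous T' y) -> (forall y, Rabs (T' y) <= 1) ->
  (forall a t, T' (a + t) = T1' a * U1 t + T2' a * U2 t) ->
  (forall y, is_derive T1 y (T1' y)) -> (forall y, Rabs (T1 y) <= 1) -> (forall y, continuous T1' y) ->
  (forall y, is_derive U1 y (U1' y)) -> (forall y, Rabs (U1 y) <= 1) ->
  (forall y, Rabs (U1' y) <= 1) -> (forall y, continuous U1' y) ->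
  (forall y, is_derive T2 y (T2' y)) -> (forall y, Rabs (T2 y) <= 1) -> (forall y, continuous T2' y) ->
  (forall y, is_derive U2 y (U2' y)) -> (forall y, Rabs (U2 y) <= 1) ->
  (forall y, Rabs (U2' y) <= 1) -> (forall y, continuous U2' y) ->
  0 <= bb -> bb^2 < rho l ->
  Rabs (RInt (gT T' m l sigma rho b c k eps) 0 bb) <=
  14 * Rmin (Rpower (1 + sigma 1%nat + rho l) (1/4))
            (Rpower (INR m) (3/2) * / c k * max1 (fun j => max1 (fun i => b j + c i) l) m).
Proof.
  intros HP dT bT cT bT' HT dT1 bT1 cT1 dU1 bU1 bU1' cU1' dT2 bT2 cT2 dU2 bU2 bU2' cU2' Hbb Hbb2.
  pose proof HP as HP'. destruct HP' as (Hm & Hl & Hk & Heps & Hrho & Hrl & Hsig & Hb & Hc).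
  destruct (Apow_ge m l sigma rho b c k eps HP) as [HA1 HAr].
  destruct (Bpow_ge m l sigma rho b c k eps HP) as [HB1 HBs].
  set (Ap := Rpower (1 + sigma 1%nat + rho l) (1/4)) in *.
  set (Bp := Rpower (INR m) (3/2) * / c k * max1 (fun j => max1 (fun i => b j + c i) l) m) in *.
  set (g := gT T' m l sigma rho b c k eps).
  assert (Htriv : forall y z, 0 <= y <= z -> z <= bb ->
     Rabs (RInt g y z) <= sqrt (rho l - y^2) - sqrt (rho l - z^2)).
  { intros y z Hyz Hz. assert (z^2 <= bb^2) by (apply pow_incr; lra).
    eapply Rle_trans. apply abs_gT; auto; lra. apply triv_bound; auto; try lra. }
  assert (HX : Rabs (RInt g 0 bb) <= 14 * Ap /\ Rabs (RInt g 0 bb) <= 14 * Bp).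
  2: { destruct HX. destruct (Rle_dec Ap Bp); [rewrite Rmin_left|rewrite Rmin_right]; lra. }
  destruct (Rle_lt_dec (rho l) 16) as [H16|H16].
  - assert (Rabs (RInt g 0 bb) <= 4).
    { eapply Rle_trans. apply Htriv; lra. pose proof (sqrt_pos (rho l - bb^2)).
      assert (sqrt (rho l) <= 4). { rewrite <- (sqrt_pow2 4) by lra. apply sqrt_le_1_alt. lra. }
      replace (0^2) with 0 by ring. rewrite Rminus_0_r. lra. }
    lra.
  - assert (H01 : forall z, 0 <= z <= 1 -> z <= bb -> Rabs (RInt g 0 z) <= 1).
    { intros z Hz Hzb. eapply Rle_trans. apply Htriv; lra.
      replace (0^2) with 0 by ring. rewrite Rminus_0_r.
      assert (sqrt (rho l - 1) <= sqrt (rho l - z^2)).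
      { apply sqrt_le_1_alt. assert (z^2 <= 1^2) by (apply pow_incr; lra). lra. }
      pose proof (sqrt_diff1 (rho l) ltac:(lra)). lra. }
    destruct (Rle_lt_dec bb 1) as [Hb1|Hb1].
    { pose proof (H01 bb ltac:(lra) ltac:(lra)). lra. }
    assert (Hsplit : RInt g 0 bb = RInt g 0 1 + RInt g 1 bb).
    { apply (gT_split T' m l sigma rho b c k eps 0 1 bb); auto; lra. }
    rewrite Hsplit. pose proof (H01 1 ltac:(lra) ltac:(lra)) as H1.
    set (S := rho l + sigma 1%nat) in *.
    assert (Hs1 : 0 <= sigma 1%nat) by (apply (Hsig 1%nat); lia).
    set (r := sqrt (sqrt S)) in *.
    assert (Hr2 : r^2 = sqrt S) by (apply pow2_sqrt, sqrt_pos).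
    assert (Hr0 : 0 <= r) by apply sqrt_pos.
    assert (HAp : Rabs (RInt g 1 bb) <= 13 * r).
    { destruct (Rle_lt_dec (rho l - sqrt S) 1) as [Hw|Hw].
      - eapply Rle_trans. apply Htriv; lra. pose proof (sqrt_pos (rho l - bb^2)).
        assert (sqrt (rho l - 1^2) <= r). { unfold r. apply sqrt_le_1_alt. lra. } lra.
      - set (y := sqrt (rho l - sqrt S)).
        assert (Hy2 : y^2 = rho l - sqrt S) by (apply pow2_sqrt; lra).
        assert (Hy1 : 1 < y). { unfold y. assert (Hq : sqrt 1 < sqrt (rho l - sqrt S)) by (apply sqrt_lt_1_alt; lra). rewrite sqrt_1 in Hq. exact Hq. }
        destruct (Rle_lt_dec bb y) as [Hby|Hby].
        + assert (bb^2 <= y^2) by (apply pow_incr; lra).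
          assert (Hq : bb^2 <= rho l - sqrt (rho l + sigma 1%nat)) by (fold S; lra).
          pose proof (A_bound T T' m l sigma rho b c k eps bb HP dT bT cT bT' H16 ltac:(lra) Hq) as HAb.
          fold S r g in HAb. lra.
        + unfold g; rewrite (gT_split T' m l sigma rho b c k eps 1 y bb); auto; try lra; fold g.
          assert (Hq : y^2 <= rho l - sqrt (rho l + sigma 1%nat)) by (fold S; lra).
          pose proof (A_bound T T' m l sigma rho b c k eps y HP dT bT cT bT' H16 ltac:(lra) Hq) as HAb.
          fold S r g in HAb.
          assert (Rabs (RInt g y bb) <= r).
          { eapply Rle_trans. apply Htriv; lra. pose proof (sqrt_pos (rho l - bb^2)).
            rewrite Hy2. replace (rho l - (rho l - sqrt S)) with (sqrt S) by ring. fold r. lra. }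
          eapply Rle_trans. apply Rabs_triang. lra. }
    assert (HBp : Rabs (RInt g 1 bb) <= 5 + 2 * (sum1 b m / c k)).
    { set (y := sqrt (rho l - 1)).
      assert (Hy2 : y^2 = rho l - 1) by (apply pow2_sqrt; lra).
      assert (Hy1 : 1 < y). { unfold y. assert (Hq : sqrt 1 < sqrt (rho l - 1)) by (apply sqrt_lt_1_alt; lra). rewrite sqrt_1 in Hq. exact Hq. }
      destruct (Rle_lt_dec bb y) as [Hby|Hby].
      + assert (bb^2 <= y^2) by (apply pow_incr; lra).
        pose proof (B_bound T' T1 T1' U1 U1' T2 T2' U2 U2' m l sigma rho b c k eps bb HP HT dT1 bT1 cT1
          dU1 bU1 bU1' cU1' dT2 bT2 cT2 dU2 bU2 bU2' cU2' H16 ltac:(lra) ltac:(lra)).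
        fold g in H0. lra.
      + unfold g; rewrite (gT_split T' m l sigma rho b c k eps 1 y bb); auto; try lra; fold g.
        pose proof (B_bound T' T1 T1' U1 U1' T2 T2' U2 U2' m l sigma rho b c k eps y HP HT dT1 bT1 cT1
          dU1 bU1 bU1' cU1' dT2 bT2 cT2 dU2 bU2 bU2' cU2' H16 ltac:(lra) ltac:(lra)).
        fold g in H.
        assert (Rabs (RInt g y bb) <= 1).
        { eapply Rle_trans. apply Htriv; lra. pose proof (sqrt_pos (rho l - bb^2)).
          rewrite Hy2. replace (rho l - (rho l - 1)) with 1 by ring. rewrite sqrt_1. lra. }
        eapply Rle_trans. apply Rabs_triang. lra. }
    split; eapply Rle_trans; try apply Rabs_triang; lra.
Qed.


Lemma ballR (x e y : R) : Rabs (y - x) < e -> ball x e y.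
Proof. intros H. exact H. Qed.

Lemma ballR_inv (x e y : R) : ball x e y -> Rabs (y - x) < e.
Proof. intros H. exact H. Qed.

Lemma ballC (x y : prod_NormedModule R_AbsRing R_NormedModule R_NormedModule) e :
  Rabs (fst y - fst x) < e -> Rabs (snd y - snd x) < e -> ball x e y.
Proof. intros H1 H2. split; [exact H1|exact H2]. Qed.

Lemma ballC_inv (x y : prod_NormedModule R_AbsRing R_NormedModule R_NormedModule) e :
  ball x e y -> Rabs (fst y - fst x) < e /\ Rabs (snd y - snd x) < e.
Proof. intros [H1 H2]. split; [exact H1|exact H2]. Qed.

Lemma dec_seq (f : nat -> R) n : (forall i, (1 <= i < n)%nat -> f (S i) <= f i) ->
  forall i j, (1 <= i <= j)%nat -> (j <= n)%nat -> f j <= f i.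
Proof.
  intros H i j. induction j as [|j IH]; intros Hij Hjn; [lia|].
  destruct (Nat.eq_dec i (S j)) as [->|Ne]; [lra|].
  assert (f j <= f i) by (apply IH; lia). assert (f (S j) <= f j) by (apply H; lia). lra.
Qed.

Lemma lim_comp_bound {T : Type} (F : (T -> Prop) -> Prop) (FF : ProperFilter F)
  (f : T -> prod_NormedModule R_AbsRing R_NormedModule R_NormedModule -> Prop) I K :
  filterlimi f F (locally I) ->
  F (fun x => forall y, f x y -> Rabs (fst y) <= K /\ Rabs (snd y) <= K) ->
  Rabs (fst I) <= K /\ Rabs (snd I) <= K.
Proof.
  intros Hl HB.
  assert (Main : forall e : posreal, Rabs (fst I) < K + e /\ Rabs (snd I) < K + e).
  { intros e. assert (HF := Hl (ball I e) (locally_ball I e)).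
    unfold filtermapi in HF.
    destruct (filter_ex _ (filter_and _ _ HF HB)) as [x [[y [Hy Hb]] Hbd]].
    destruct (Hbd y Hy). destruct (ballC_inv I y e Hb).
    split.
    - assert (Rabs (fst I) <= Rabs (fst y) + Rabs (fst y - fst I)).
      { replace (fst I) with (fst y - (fst y - fst I)) at 1 by ring. 
        eapply Rle_trans. apply Rabs_triang. rewrite Rabs_Ropp. lra. }
      lra.
    - assert (Rabs (snd I) <= Rabs (snd y) + Rabs (snd y - snd I)).
      { replace (snd I) with (snd y - (snd y - snd I)) at 1 by ring.
        eapply Rle_trans. apply Rabs_triang. rewrite Rabs_Ropp. lra. }
      lra. }
  split; apply Rnot_lt_le; intro Hc.
  - assert (He : 0 < Rabs (fst I) - K) by lra.
    destruct (Main (mkposreal _ He)) as [H1 _]. simpl in H1. lra.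
  - assert (He : 0 < Rabs (snd I) - K) by lra.
    destruct (Main (mkposreal _ He)) as [_ H1]. simpl in H1. lra.
Qed.

Theorem lemma7p6 :
  exists C0 : R,
  forall (m l : nat), (1 <= m)%nat -> (1 <= l)%nat ->
  forall (sigma rho b c : nat -> R),
    (forall j, (1 <= j < m)%nat -> sigma (S j) <= sigma j) ->
    0 <= sigma m ->
    (forall i, (1 <= i < l)%nat -> rho (S i) <= rho i) ->
    0 < rho l ->
    (forall j, (1 <= j <= m)%nat -> 0 < b j) ->
    (forall i, (1 <= i <= l)%nat -> 0 < c i) ->
  forall k : nat, (1 <= k <= l)%nat ->
  forall eps : R, eps = 1 \/ eps = -1 ->
  exists I : C,
    is_RInt_gen (integrand m l k eps sigma rho b c)
      (at_point 0) (at_left (sqrt (rho l))) I /\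
    Cmod I <= C0 * Rmin (Rpower (1 + sigma 1%nat + rho l) (1/4))
                        (Rpower (INR m) (3/2) * / c k *
                         max1 (fun j => max1 (fun i => b j + c i) l) m).
Proof.
  exists 28. intros m l Hm Hl sigma rho b c Hsd Hsm Hrd Hrl Hb Hc k Hk eps Heps.
  assert (HP : HypP m l sigma rho b c k eps).
  { unfold HypP. split; [auto|]. split; [auto|]. split; [auto|]. split; [auto|].
    split. intros i Hi. apply (dec_seq rho l Hrd i l); lia.
    split; [auto|]. split; [|auto].
    intros j Hj. split. pose proof (dec_seq sigma m Hsd j m ltac:(lia) ltac:(lia)). lra.
    apply (dec_seq sigma m Hsd 1 j); lia. }
  pose proof HP as HP'. destruct HP' as (_ & _ & _ & _ & Hrho & _ & Hsig & _ & _).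
  set (K := 14 * Rmin (Rpower (1 + sigma 1%nat + rho l) (1/4))
                        (Rpower (INR m) (3/2) * / c k *
                         max1 (fun j => max1 (fun i => b j + c i) l) m)).
  set (f := integrand m l k eps sigma rho b c).
  set (gc := gT cos m l sigma rho b c k eps).
  set (gs := gT sin m l sigma rho b c k eps).
  assert (Hfst : forall x, fst (f x) = gc x).
  { intros x. unfold f, gc, integrand, gT, psi, Am, Sc, Th. simpl. unfold Rdiv. ring. }
  assert (Hsnd : forall x, snd (f x) = gs x).
  { intros x. unfold f, gs, integrand, gT, psi, Am, Sc, Th. simpl. unfold Rdiv. ring. }
  set (s := sqrt (rho l)).
  assert (Hs0 : 0 < s) by (apply sqrt_lt_R0; auto).
  assert (Hs2 : s^2 = rho l) by (apply pow2_sqrt; lra).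
  assert (Hrk : rho l <= rho k) by (apply Hrho; auto).
  assert (Hsq : forall x, 0 <= x < s -> x^2 < rho l).
  { intros x Hx. rewrite <- Hs2. nra. }
  assert (bsin : forall y, Rabs (sin y) <= 1) by (intros; apply Rabs_le; apply SIN_bound).
  assert (bcos : forall y, Rabs (cos y) <= 1) by (intros; apply Rabs_le; apply COS_bound).
  assert (bnsin : forall y, Rabs (- sin y) <= 1) by (intros; rewrite Rabs_Ropp; auto).
  assert (bncos : forall y, Rabs (- cos y) <= 1) by (intros; rewrite Rabs_Ropp; auto).
  assert (dsin : forall y, is_derive sin y (cos y)) by (intros; apply is_derive_sin).
  assert (dcos : forall y, is_derive cos y (- sin y)) by (intros; apply is_derive_cos).
  assert (dncos : forall y, is_derive (fun t => - cos t) y (sin y)) by (intros; auto_derive; auto; ring).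
  assert (dnsin : forall y, is_derive (fun t => - sin t) y (- cos y)) by (intros; auto_derive; auto; ring).
  assert (csin : forall y, continuous sin y) by (intros; apply cR_ex; auto_derive; auto).
  assert (ccos : forall y, continuous cos y) by (intros; apply cR_ex; auto_derive; auto).
  assert (cnsin : forall y, continuous (fun t => - sin t) y) by (intros; apply cR_ex; auto_derive; auto).
  assert (cncos : forall y, continuous (fun t => - cos t) y) by (intros; apply cR_ex; auto_derive; auto).
  assert (Hcomp : forall bb, 0 <= bb < s -> Rabs (RInt gc 0 bb) <= K /\ Rabs (RInt gs 0 bb) <= K).
  { intros bb Hbb. split.
    - apply (comp_bound sin cos sin cos cos (fun t => - sin t) (fun t => - cos t) sin
        (fun t => - sin t) (fun t => - cos t)); auto; try lra.
      intros a t. rewrite cos_plus. ring.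
    - apply (comp_bound (fun t => - cos t) sin (fun t => - cos t) sin cos (fun t => - sin t) sin cos
        sin cos); auto; try lra.
      intros a t. rewrite sin_plus. ring. }
  assert (cg : forall T', (forall y, continuous T' y) -> forall x, 0 <= x < s ->
     continuous (gT T' m l sigma rho b c k eps) x).
  { intros T' cT x Hx. apply cgT; auto. specialize (Hsq x Hx). lra. }
  assert (exg : forall T', (forall y, continuous T' y) -> forall a bb, 0 <= a < s -> 0 <= bb < s ->
     ex_RInt (gT T' m l sigma rho b c k eps) a bb).
  { intros T' cT a bb Ha Hbb. apply (ex_RInt_continuous (V:=R_CompleteNormedModule)). intros z Hz.
    apply cg; auto. split.
    - eapply Rle_trans; [|apply Hz]. apply Rmin_glb; lra.
    - eapply Rle_lt_trans; [apply Hz|]. apply Rmax_lub_lt; lra. }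
  assert (HisR : forall a bb, 0 <= a < s -> 0 <= bb < s ->
     is_RInt f a bb (RInt gc a bb, RInt gs a bb)).
  { intros a bb Ha Hbb. apply is_RInt_fct_extend_pair.
    - apply (is_RInt_ext gc). intros; rewrite Hfst; auto.
      apply (RInt_correct (V:=R_CompleteNormedModule)). apply exg; auto.
    - apply (is_RInt_ext gs). intros; rewrite Hsnd; auto.
      apply (RInt_correct (V:=R_CompleteNormedModule)). apply exg; auto. }
  assert (Huniq : forall a bb y, 0 <= a < s -> 0 <= bb < s -> is_RInt f a bb y ->
     y = (RInt gc a bb, RInt gs a bb)).
  { intros a bb [y1 y2] Ha Hbb Hy.
    pose proof (is_RInt_fct_extend_fst f a bb (y1, y2) Hy) as H1.
    pose proof (is_RInt_fct_extend_snd f a bb (y1, y2) Hy) as H2. simpl in H1, H2.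
    assert (H1' : is_RInt gc a bb y1) by (apply (is_RInt_ext (fun t => fst (f t))); [intros; auto | exact H1]).
    assert (H2' : is_RInt gs a bb y2) by (apply (is_RInt_ext (fun t => snd (f t))); [intros; auto | exact H2]).
    apply (is_RInt_unique (V:=R_CompleteNormedModule)) in H1'.
    apply (is_RInt_unique (V:=R_CompleteNormedModule)) in H2'. rewrite H1', H2'. reflexivity. }
  set (phi := fun x => sqrt (rho l - x^2)).
  assert (Htriv : forall g T', g = gT T' m l sigma rho b c k eps -> (forall y, continuous T' y) ->
     (forall y, Rabs (T' y) <= 1) ->
     forall y z, 0 <= y <= z -> z < s -> Rabs (RInt g y z) <= phi y - phi z).
  { intros g T' -> cT bT y z Hyz Hz. eapply Rle_trans. apply abs_gT; auto. apply Hsq; lra.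
    apply triv_bound; auto. apply Hsq; lra. }
  assert (Hdiff : forall g T', g = gT T' m l sigma rho b c k eps -> (forall y, continuous T' y) ->
     (forall y, Rabs (T' y) <= 1) -> forall e b1 b2, 0 <= b1 < s -> 0 <= b2 < s ->
     Rabs (phi b1) < e -> Rabs (phi b2) < e -> Rabs (RInt g 0 b2 - RInt g 0 b1) < e).
  { intros g T' Eg cT bT e b1 b2 Hb1 Hb2 Hp1 Hp2.
    assert (Hsp : forall p q r, 0 <= p <= q -> q <= r -> r < s -> RInt g p r = RInt g p q + RInt g q r).
    { intros p q r Hpq Hqr Hr. rewrite Eg. apply gT_split; auto; try lra; try (apply Hsq; lra). }
    pose proof (sqrt_pos (rho l - b1^2)). pose proof (sqrt_pos (rho l - b2^2)).
    unfold phi in *. rewrite Rabs_right in Hp1, Hp2 by lra.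
    destruct (Rle_lt_dec b1 b2).
    - rewrite (Hsp 0 b1 b2) by lra. unfold Rminus. rewrite Rplus_comm, <- Rplus_assoc, Rplus_opp_l, Rplus_0_l.
      eapply Rle_lt_trans. apply (Htriv g T'); auto; lra. unfold phi. lra.
    - rewrite (Hsp 0 b2 b1) by lra. unfold Rminus. rewrite Ropp_plus_distr, <- Rplus_assoc, Rplus_opp_r, Rplus_0_l.
      rewrite Rabs_Ropp. eapply Rle_lt_trans. apply (Htriv g T'); auto; lra. unfold phi. lra. }
  assert (HF : ProperFilter (filter_prod (at_point 0) (at_left s))).
  { apply filter_prod_proper; try apply at_point_filter; try apply at_left_proper_filter. }
  assert (Hev : at_left s (fun bb => 0 <= bb < s)).
  { unfold at_left, within. exists (mkposreal s Hs0). intros y Hy Hlt. apply ballR_inv in Hy. simpl in Hy.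
    unfold Rabs in Hy; destruct Rcase_abs in Hy; lra. }
  assert (Hphi : forall e : posreal, at_left s (fun bb => Rabs (phi bb) < e)).
  { intros e. assert (Hc0 : continuous phi s).
    { unfold phi. apply continuous_sqrt_comp. apply cR_minus. apply continuous_const. apply cR_ex; auto_derive; auto. }
    assert (E0 : phi s = 0). { unfold phi. rewrite Hs2. replace (rho l - rho l) with 0 by ring. apply sqrt_0. }
    assert (HL := Hc0 (ball (phi s) e) (locally_ball (phi s) e)).
    unfold at_left, within. unfold filtermap in HL. apply (filter_imp (fun x => ball (phi s) e (phi x))); auto.
    intros x Hx _. apply ballR_inv in Hx. rewrite E0, Rminus_0_r in Hx. exact Hx. }
  set (FR := fun (ab : R * R) (y : C_R_CompleteNormedModule) => is_RInt f (fst ab) (snd ab) y).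
  assert (Hex : filter_prod (at_point 0) (at_left s) (fun x =>
     (exists y, FR x y) /\ (forall y1 y2, FR x y1 -> FR x y2 -> y1 = y2))).
  { apply (Filter_prod _ _ _ (fun a => a = 0) (fun bb => 0 <= bb < s)); auto.
    + reflexivity.
    + intros x y -> Hy. unfold FR. simpl. split.
      * exists (RInt gc 0 y, RInt gs 0 y). apply HisR; lra.
      * intros y1 y2 H1 H2. rewrite (Huniq 0 y y1 ltac:(lra) Hy H1), (Huniq 0 y y2 ltac:(lra) Hy H2). reflexivity. }
  assert (Hcau : forall e : posreal, exists P : R * R -> Prop, filter_prod (at_point 0) (at_left s) P /\
     (forall u v, P u -> P v -> forall u' v', FR u u' -> FR v v' -> ball u' e v')).
  { intros e.
    exists (fun ab : R * R => fst ab = 0 /\ (0 <= snd ab < s /\ Rabs (phi (snd ab)) < e)).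
    split.
    + apply (Filter_prod _ _ _ (fun a => a = 0) (fun bb => 0 <= bb < s /\ Rabs (phi bb) < e)).
      reflexivity. apply filter_and; auto. intros x y Hx Hy; simpl; auto.
    + intros [a1 b1] [a2 b2] [Ha1 [Hb1 Hp1]] [Ha2 [Hb2 Hp2]] u' v' Hu Hv. unfold FR in Hu, Hv. simpl in *. subst.
      rewrite (Huniq 0 b1 u' ltac:(lra) Hb1 Hu), (Huniq 0 b2 v' ltac:(lra) Hb2 Hv).
      apply ballC; simpl.
      * apply (Hdiff gc cos); auto.
      * apply (Hdiff gs sin); auto. }
  destruct (proj1 (filterlimi_locally_cauchy (U := C_R_CompleteNormedModule) (FF := HF) FR Hex) Hcau) as [I HI].
  exists I. split. exact HI.
  destruct (lim_comp_bound _ HF _ I K HI) as [B1 B2].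
  { apply (Filter_prod _ _ _ (fun a => a = 0) (fun bb => 0 <= bb < s)); auto.
    reflexivity. intros x y -> Hy y' Hy'. unfold FR in Hy'. simpl in Hy'.
    rewrite (Huniq 0 y y' ltac:(lra) Hy Hy'). simpl. apply Hcomp; auto. }
  eapply Rle_trans. apply Cmod_2Rmax.
  assert (sqrt 2 <= 2). { rewrite <- (sqrt_pow2 2) at 2 by lra. apply sqrt_le_1_alt. lra. }
  assert (Rmax (Rabs (fst I)) (Rabs (snd I)) <= K) by (apply Rmax_lub; auto).
  assert (0 <= Rmax (Rabs (fst I)) (Rabs (snd I))) by (eapply Rle_trans; [apply Rabs_pos| apply Rmax_l]).
  unfold K in *. nra.
Qed.
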